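(* For every $m\ge1$ and every $X\in V_m\setminus V_0$, $\int_{\mathfrak{ST}}\psi^m_X\,d\mu=\dfrac{2}{4^{m+1}}$. Consequently, for every $u\in\mathrm{dom}\,\Delta$ and every $X\in V_\star\setminus V_0$, $$\Delta u(X)=2\lim_{m\to\infty}6^m\,\Delta_mu(X).$$
   Context: Let $P_0=(0,0,0)$, $P_1=(6^{1/3},0,6^{1/3})$, $P_2=(0,6^{1/3},6^{1/3})$, $P_3=(0,0,6^{1/3})$ in $\mathbb R^3$, $f_i(X)=(X+P_i)/2$, and $\mathfrak{ST}$ the unique nonempty compact set with $\mathfrak{ST}=\bigcup_{i=0}^3 f_i(\mathfrak{ST})$. For a word $\mathcal W\in\{0,1,2,3\}^m$, $f_{\mathcal W}=f_{\mathcal W_1}\circ\cdots\circ f_{\mathcal W_m}$. $V_0=\{P_0,\dots,P_3\}$, $V_m=\bigcup_{|\mathcal W|=m}f_{\mathcal W}(V_0)$, $V_\star=\bigcup_m V_m$. $X\sim_m Y$ means $X\ne Y$ and $X,Y\in f_{\mathcal W}(V_0)$ for some word $\mathcal W$ of length $m$. For $u,v:V_m\to\mathbb R$, $\mathcal E_m(u,v)=(3/2)^m\sum_{\{X,Y\}:X\sim_mY}(u(X)-u(Y))(v(X)-v(Y))$ (unordered pairs). For continuous $u$ on $\mathfrak{ST}$, $\mathcal E(u)=\lim_m\mathcal E_m(u|_{V_m},u|_{V_m})\in[0,\infty]$; $\mathrm{dom}\,\mathcal E=\{u\in C(\mathfrak{ST}):\mathcal E(u)<\infty\}$, $\mathcal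 E(u,v)=\lim_m\mathcal E_m(u|_{V_m},v|_{V_m})$, $\mathrm{dom}_0\,\mathcal E=\{u\in\mathrm{dom}\,\mathcal E:u|_{V_0}=0\}$. $\mu$ is the Borel probability measure on $\mathfrak{ST}$ with $\mu=\frac14\sum_i\mu\circ f_i^{-1}$. $\mathrm{dom}\,\Delta$ is the set of $u\in\mathrm{dom}\,\mathcal E$ for which there is a continuous $f$ with $\mathcal E(u,v)=-\int_{\mathfrak{ST}}vf\,d\mu$ for all $v\in\mathrm{dom}_0\,\mathcal E$; then $\Delta u:=f$. For $u:V_m\to\mathbb R$, $X\in V_m\setminus V_0$: $\Delta_mu(X)=\sum_{Y\sim_mX}(u(Y)-u(X))$. For $X\in V_m$, $\psi^m_X$ is the continuous function with $\psi^m_X(Y)=\delta_{XY}$ for $Y\in V_m$ such that for every $k\ge m$, $\psi^m_X|_{V_{k+1}}$ is the extension of $\psi^m_X|_{V_k}$ minimizing $\sum_{\{Y,Z\}:Y\sim_{k+1}Z}(w(Y)-w(Z))^2$. *)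

(* Defs.v *)
From Stdlib Require Import Reals Lra List Bool.
Import ListNotations.
Open Scope R_scope.
Local Open Scope bool_scope.

Definition pt : Type := (R * R * R)%type.

Definition padd (x y : pt) : pt :=
  match x, y with (a1, a2, a3), (b1, b2, b3) => (a1 + b1, a2 + b2, a3 + b3) end.
Definition pscale (c : R) (x : pt) : pt :=
  match x with (a1, a2, a3) => (c * a1, c * a2, c * a3) end.
Definition pnorm (x : pt) : R :=
  match x with (a1, a2, a3) => sqrt (a1 * a1 + a2 * a2 + a3 * a3) end.
Definition pdist (x y : pt) : R := pnorm (padd x (pscale (-1) y)).

Definition pt_eq_dec (x y : pt) : {x = y} + {x <> y}.
Proof. repeat (decide equality; try apply Req_EM_T). Defined.

Definition inb (X : pt) (l : list pt) : bool :=
  existsb (fun Y => if pt_eq_dec X Y then true else false) l.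

Definition a6 : R := Rpower 6 (1/3).
Definition P (i : nat) : pt :=
  match i with
  | 0%nat => (0, 0, 0)
  | 1%nat => (a6, 0, a6)
  | 2%nat => (0, a6, a6)
  | _ => (0, 0, a6)
  end.
Definition fmap (i : nat) (x : pt) : pt := pscale (1/2) (padd x (P i)).

Definition fW (w : list nat) (x : pt) : pt := fold_right fmap x w.
Fixpoint words (m : nat) : list (list nat) :=
  match m with
  | 0%nat => [[]]
  | S k => flat_map (fun w => map (fun i => i :: w) [0;1;2;3]%nat) (words k)
  end.
Definition cell (w : list nat) : list pt := map (fun i => fW w (P i)) [0;1;2;3]%nat.

Definition Vm (m : nat) : list pt := nodup pt_eq_dec (flat_map cell (words m)).
Definition Vstar (X : pt) : Prop := exists m, In X (Vm m).

Definition adj (m : nat) (X Y : pt) : bool :=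
  negb (if pt_eq_dec X Y then true else false) &&
  existsb (fun w => inb X (cell w) && inb Y (cell w)) (words m).

Fixpoint upairs (l : list pt) : list (pt * pt) :=
  match l with
  | [] => []
  | x :: t => map (fun y => (x, y)) t ++ upairs t
  end.

Definition sumR {A} (F : A -> R) (l : list A) : R := fold_right Rplus 0 (map F l).

Definition Eraw (m : nat) (u v : pt -> R) : R :=
  sumR (fun p : pt * pt => (u (fst p) - u (snd p)) * (v (fst p) - v (snd p)))
       (filter (fun p : pt * pt => adj m (fst p) (snd p)) (upairs (Vm m))).
Definition Em (m : nat) (u v : pt -> R) : R := (3/2) ^ m * Eraw m u v.

Definition Lapm (m : nat) (u : pt -> R) (X : pt) : R :=
  sumR (fun Y => u Y - u X) (filter (fun Y => adj m X Y) (Vm m)).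

Definition bounded (K : pt -> Prop) : Prop := exists M, forall x, K x -> pnorm x <= M.
Definition closed (K : pt -> Prop) : Prop :=
  forall (s : nat -> pt) x, (forall n, K (s n)) -> Un_cv (fun n => pdist (s n) x) 0 -> K x.
Definition is_attractor (K : pt -> Prop) : Prop :=
  (exists x, K x) /\ bounded K /\ closed K /\
  forall x, K x <-> exists i y, (i < 4)%nat /\ K y /\ x = fmap i y.

Definition contK (K : pt -> Prop) (u : pt -> R) : Prop :=
  forall x, K x -> forall eps, 0 < eps -> exists delta, 0 < delta /\
    forall y, K y -> pdist y x < delta -> Rabs (u y - u x) < eps.

(** I g = integral of g (continuous on K) against a Borel probability measure mu
    on K with mu = 1/4 sum_i mu o f_i^{-1}; by the Riesz representation theorem
    such mu are exactly the positive normalised linear functionals on C(K)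
    with the self-similarity identity below. *)
Definition is_ss_integral (K : pt -> Prop) (I : (pt -> R) -> R) : Prop :=
  (forall g h a b, contK K g -> contK K h ->
     I (fun x => a * g x + b * h x) = a * I g + b * I h) /\
  (forall g, contK K g -> (forall x, K x -> 0 <= g x) -> 0 <= I g) /\
  I (fun _ => 1) = 1 /\
  (forall g, contK K g ->
     I g = / 4 * sumR (fun i => I (fun x => g (fmap i x))) [0;1;2;3]%nat).

Definition domE (K : pt -> Prop) (u : pt -> R) : Prop :=
  contK K u /\ exists l, Un_cv (fun m => Em m u u) l.
Definition dom0E (K : pt -> Prop) (v : pt -> R) : Prop :=
  domE K v /\ forall X, In X (Vm 0) -> v X = 0.

Definition is_Laplacian (K : pt -> Prop) (I : (pt -> R) -> R) (u f : pt -> R) : Prop :=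
  domE K u /\ contK K f /\
  forall v, dom0E K v -> Un_cv (fun m => Em m u v) (- I (fun x => v x * f x)).

Definition is_psi (K : pt -> Prop) (m : nat) (X : pt) (psi : pt -> R) : Prop :=
  contK K psi /\
  (forall Y, In Y (Vm m) -> psi Y = if pt_eq_dec X Y then 1 else 0) /\
  (forall k, (m <= k)%nat -> forall w : pt -> R,
     (forall Y, In Y (Vm k) -> w Y = psi Y) ->
     Eraw (S k) psi psi <= Eraw (S k) w w).

(* Main.v *)
Require Import Defs.
From Stdlib Require Import Reals List Lra Lia Psatz ZArith Classical FunctionalExtensionality ClassicalEpsilon.
Import ListNotations.
Open Scope R_scope.

Lemma sumR_nil {A} (F : A -> R) : sumR F [] = 0.
Proof. reflexivity. Qed.
Lemma sumR_cons {A} (F : A -> R) x l : sumR F (x :: l) = F x + sumR F l.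
Proof. reflexivity. Qed.
Lemma sumR_app {A} (F : A -> R) l1 l2 : sumR F (l1 ++ l2) = sumR F l1 + sumR F l2.
Proof. induction l1; [unfold sumR; simpl; ring|]. simpl. rewrite !sumR_cons, IHl1; ring. Qed.
Lemma sumR_ext {A} (F G : A -> R) l : (forall x, In x l -> F x = G x) -> sumR F l = sumR G l.
Proof. induction l; intros H; [reflexivity|]. rewrite !sumR_cons, H, IHl; auto with datatypes. Qed.
Lemma sumR_plus {A} (F G : A -> R) l : sumR (fun x => F x + G x) l = sumR F l + sumR G l.
Proof. induction l; [simpl; unfold sumR; simpl; ring|]. rewrite !sumR_cons, IHl; ring. Qed.
Lemma sumR_minus {A} (F G : A -> R) l : sumR (fun x => F x - G x) l = sumR F l - sumR G l.
Proof. induction l; [unfold sumR; simpl; ring|]. rewrite !sumR_cons, IHl; ring. Qed.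
Lemma sumR_scal {A} (F : A -> R) c l : sumR (fun x => c * F x) l = c * sumR F l.
Proof. induction l; [unfold sumR; simpl; ring|]. rewrite !sumR_cons, IHl; ring. Qed.
Lemma sumR_scal_r {A} (F : A -> R) c l : sumR (fun x => F x * c) l = sumR F l * c.
Proof. induction l; [unfold sumR; simpl; ring|]. rewrite !sumR_cons, IHl; ring. Qed.
Lemma sumR_map {A B} (F : B -> R) (g : A -> B) l : sumR F (map g l) = sumR (fun x => F (g x)) l.
Proof. unfold sumR. rewrite map_map. reflexivity. Qed.
Lemma sumR_flat_map {A B} (F : B -> R) (g : A -> list B) l :
  sumR F (flat_map g l) = sumR (fun x => sumR F (g x)) l.
Proof. induction l; [reflexivity|]. simpl. rewrite sumR_app, IHl. reflexivity. Qed.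
Lemma sumR_swap {A B} (F : A -> B -> R) l1 l2 :
  sumR (fun x => sumR (fun y => F x y) l2) l1 = sumR (fun y => sumR (fun x => F x y) l1) l2.
Proof.
  induction l1; simpl.
  - unfold sumR at 1; simpl. induction l2; [reflexivity|]. rewrite sumR_cons, <- IHl2. unfold sumR; simpl; ring.
  - rewrite sumR_cons, IHl1, <- sumR_plus. apply sumR_ext; intros; reflexivity.
Qed.
Lemma sumR_le {A} (F G : A -> R) l : (forall x, In x l -> F x <= G x) -> sumR F l <= sumR G l.
Proof. induction l; intros H; [unfold sumR; simpl; lra|]. rewrite !sumR_cons.
  apply Rplus_le_compat; auto with datatypes. Qed.
Lemma sumR_const {A} c (l : list A) : sumR (fun _ => c) l = INR (length l) * c.
Proof. induction l; [unfold sumR; simpl; ring|]. rewrite sumR_cons, IHl, length_cons, S_INR; ring. Qed.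
Lemma sumR_zero {A} (F : A -> R) l : (forall x, In x l -> F x = 0) -> sumR F l = 0.
Proof. intros H. rewrite (sumR_ext F (fun _ => 0)) by auto. rewrite sumR_const; ring. Qed.
Lemma sumR_abs {A} (F : A -> R) l : Rabs (sumR F l) <= sumR (fun x => Rabs (F x)) l.
Proof. induction l; [unfold sumR; simpl; rewrite Rabs_R0; lra|]. rewrite !sumR_cons.
  eapply Rle_trans; [apply Rabs_triang|]. lra. Qed.
Lemma sumR_nonneg {A} (F : A -> R) l : (forall x, In x l -> 0 <= F x) -> 0 <= sumR F l.
Proof. intros H. rewrite <- (sumR_zero (fun _ => 0) l) by auto. apply sumR_le; auto. Qed.
Lemma sumR_filter {A} (F : A -> R) p l :
  sumR F (filter p l) = sumR (fun x => if p x then F x else 0) l.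
Proof. induction l; [reflexivity|]. rewrite (sumR_cons _ a). cbn [filter]. destruct (p a); [rewrite sumR_cons|]; rewrite IHl; ring. Qed.

Notation L4 := [0;1;2;3]%nat.
Lemma sumL4 (F : nat -> R) : sumR F [0;1;2;3]%nat = F 0%nat + F 1%nat + F 2%nat + F 3%nat.
Proof. unfold sumR; simpl; ring. Qed.
Lemma inL4 i : In i [0;1;2;3]%nat <-> (i < 4)%nat.
Proof. simpl. split; [intros [|[|[|[|[]]]]]; lia| intros; lia]. Qed.

Definition ind (x y : pt) : R := if pt_eq_dec x y then 1 else 0.
Lemma sum_delta (l : list pt) (z : pt) (phi : pt -> R) :
  NoDup l -> In z l -> sumR (fun x => if pt_eq_dec z x then phi x else 0) l = phi z.
Proof.
  induction l as [|a l IH]; intros Hnd Hin; [destruct Hin|].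
  inversion Hnd; subst. rewrite sumR_cons. destruct (pt_eq_dec z a).
  - subst. rewrite sumR_zero; [ring|]. intros x Hx. destruct (pt_eq_dec a x); [subst; contradiction|auto].
  - destruct Hin as [->|Hin]; [congruence|]. rewrite IH; auto; ring.
Qed.

Definition isw (w : list nat) : Prop := forall i, In i w -> (i < 4)%nat.

Lemma words_spec n w : In w (words n) <-> length w = n /\ isw w.
Proof.
  revert w; induction n; intros w; cbn [words].
  - split. intros [<-|[]]; split; [reflexivity| intros i []].
    intros [H _]; destruct w; [left; reflexivity|discriminate].
  - rewrite in_flat_map. split.
    + intros [v [Hv Hw]]. apply IHn in Hv as [Hl Hi]. apply in_map_iff in Hw as [i [<- Hi']].
      split; [simpl; lia|]. intros j [->|Hj]; [apply inL4; auto| auto].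
    + intros [Hl Hi]. destruct w as [|i v]; [discriminate|]. exists v. split.
      * apply IHn. split; [simpl in Hl; lia|]. intros j Hj; apply Hi; simpl; auto.
      * apply in_map_iff. exists i; split; auto. apply inL4, Hi; simpl; auto.
Qed.

Lemma isw_app v w : isw (v ++ w) <-> isw v /\ isw w.
Proof. unfold isw; split; [intros H; split; intros i Hi; apply H, in_app_iff; auto|
  intros [H1 H2] i Hi; apply in_app_iff in Hi as [|]; auto]. Qed.
Lemma isw_cons i w : isw (i :: w) <-> (i < 4)%nat /\ isw w.
Proof. unfold isw; simpl; split; [intros H; split; auto|intros [H1 H2] j [<-|]; auto]. Qed.
Lemma isw_nil : isw [].
Proof. intros i []. Qed.

Lemma words_app_sum n (F : list nat -> R) :
  sumR F (words (S n)) = sumR (fun w => sumR (fun j => F (w ++ [j])) [0;1;2;3]%nat) (words n).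
Proof.
  revert F; induction n; intros F.
  - simpl. unfold sumR; simpl; ring.
  - change (words (S (S n))) with (flat_map (fun w => map (fun i => i :: w) [0;1;2;3]%nat) (words (S n))).
    rewrite sumR_flat_map.
    rewrite (IHn (fun w => sumR F (map (fun i => i :: w) [0;1;2;3]%nat))).
    change (words (S n)) with (flat_map (fun w => map (fun i => i :: w) [0;1;2;3]%nat) (words n)).
    rewrite sumR_flat_map. apply sumR_ext; intros w _.
    rewrite sumR_map. rewrite (sumR_ext _ (fun j => sumR (fun i => F (i :: w ++ [j])) [0;1;2;3]%nat)).
    2:{ intros j _. rewrite sumR_map. reflexivity. }
    rewrite sumR_swap. reflexivity.
Qed.

Lemma words_cons_sum n (F : list nat -> R) :
  sumR F (words (S n)) = sumR (fun i => sumR (fun w => F (i :: w)) (words n)) [0;1;2;3]%nat.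
Proof.
  change (words (S n)) with (flat_map (fun w => map (fun i => i :: w) [0;1;2;3]%nat) (words n)).
  rewrite sumR_flat_map, sumR_swap. apply sumR_ext; intros i _.
  rewrite sumR_map. reflexivity.
Qed.

Definition c1 (x : pt) : R := fst (fst x).
Definition c2 (x : pt) : R := snd (fst x).
Definition c3 (x : pt) : R := snd x.

Lemma pt_ext (x y : pt) : c1 x = c1 y -> c2 x = c2 y -> c3 x = c3 y -> x = y.
Proof. destruct x as [[x1 x2] x3], y as [[y1 y2] y3]; unfold c1,c2,c3; simpl; intros; subst; reflexivity. Qed.

Lemma a_pos : 0 < a6.
Proof. unfold a6, Rpower. apply exp_pos. Qed.

Lemma c1_fmap i x : c1 (fmap i x) = (c1 x + c1 (P i)) / 2.
Proof. destruct x as [[x1 x2] x3]; unfold fmap; destruct (P i) as [[p1 p2] p3]; unfold c1; simpl; field. Qed.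
Lemma c2_fmap i x : c2 (fmap i x) = (c2 x + c2 (P i)) / 2.
Proof. destruct x as [[x1 x2] x3]; unfold fmap; destruct (P i) as [[p1 p2] p3]; unfold c2; simpl; field. Qed.
Lemma c3_fmap i x : c3 (fmap i x) = (c3 x + c3 (P i)) / 2.
Proof. destruct x as [[x1 x2] x3]; unfold fmap; destruct (P i) as [[p1 p2] p3]; unfold c3; simpl; field. Qed.

Definition Pc (i : nat) : R * R * R :=
  match i with 0%nat => (0,0,0) | 1%nat => (1,0,1) | 2%nat => (0,1,1) | _ => (0,0,1) end.
Lemma c1_P i : c1 (P i) = a6 * c1 (Pc i).
Proof. destruct i as [|[|[|]]]; unfold c1; simpl; ring. Qed.
Lemma c2_P i : c2 (P i) = a6 * c2 (Pc i).
Proof. destruct i as [|[|[|]]]; unfold c2; simpl; ring. Qed.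
Lemma c3_P i : c3 (P i) = a6 * c3 (Pc i).
Proof. destruct i as [|[|[|]]]; unfold c3; simpl; ring. Qed.

Lemma fW_cons i w x : fW (i :: w) x = fmap i (fW w x).
Proof. reflexivity. Qed.
Lemma fW_app v w x : fW (v ++ w) x = fW v (fW w x).
Proof. unfold fW. rewrite fold_right_app. reflexivity. Qed.
Lemma fW_nil x : fW [] x = x.
Proof. reflexivity. Qed.

Lemma fmap_PP i : fmap i (P i) = P i.
Proof. apply pt_ext; rewrite ?c1_fmap, ?c2_fmap, ?c3_fmap; field. Qed.
Lemma fmap_sym i j : fmap i (P j) = fmap j (P i).
Proof. apply pt_ext; rewrite ?c1_fmap, ?c2_fmap, ?c3_fmap; field. Qed.

Lemma c1_fW w x : c1 (fW w x) = c1 x / 2 ^ length w + c1 (fW w (P 0)).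
Proof. induction w; simpl length; rewrite ?fW_cons, ?c1_fmap.
  - unfold fW; simpl. unfold c1; simpl; field.
  - rewrite IHw. simpl pow. field; apply pow_nonzero; lra. Qed.
Lemma c2_fW w x : c2 (fW w x) = c2 x / 2 ^ length w + c2 (fW w (P 0)).
Proof. induction w; simpl length; rewrite ?fW_cons, ?c2_fmap.
  - unfold fW; simpl. unfold c2; simpl; field.
  - rewrite IHw. simpl pow. field; apply pow_nonzero; lra. Qed.
Lemma c3_fW w x : c3 (fW w x) = c3 x / 2 ^ length w + c3 (fW w (P 0)).
Proof. induction w; simpl length; rewrite ?fW_cons, ?c3_fmap.
  - unfold fW; simpl. unfold c3; simpl; field.
  - rewrite IHw. simpl pow. field; apply pow_nonzero; lra. Qed.

Lemma fW_inj w x y : fW w x = fW w y -> x = y.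
Proof. intros H. assert (H1 := c1_fW w x). assert (H2 := c2_fW w x). assert (H3 := c3_fW w x).
  rewrite H in H1, H2, H3. rewrite c1_fW in H1; rewrite c2_fW in H2; rewrite c3_fW in H3.
  assert (0 < 2 ^ length w) by (apply pow_lt; lra).
  apply pt_ext.
  - apply (Rmult_eq_reg_r (/ 2 ^ length w)); [|apply Rinv_neq_0_compat; lra]. unfold Rdiv in H1; lra.
  - apply (Rmult_eq_reg_r (/ 2 ^ length w)); [|apply Rinv_neq_0_compat; lra]. unfold Rdiv in H2; lra.
  - apply (Rmult_eq_reg_r (/ 2 ^ length w)); [|apply Rinv_neq_0_compat; lra]. unfold Rdiv in H3; lra.
Qed.

Lemma P_inj i j : (i < 4)%nat -> (j < 4)%nat -> P i = P j -> i = j.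
Proof. intros Hi Hj H. assert (h1 := f_equal c1 H). assert (h2 := f_equal c2 H). assert (h3 := f_equal c3 H).
  rewrite !c1_P in h1; rewrite !c2_P in h2; rewrite !c3_P in h3. pose proof a_pos.
  destruct i as [|[|[|[|]]]]; destruct j as [|[|[|[|]]]]; try lia; unfold c1, c2, c3 in *; simpl in *; nra. Qed.

Lemma pdist_eq x y : pdist x y = sqrt ((c1 x - c1 y)^2 + (c2 x - c2 y)^2 + (c3 x - c3 y)^2).
Proof. destruct x as [[x1 x2] x3], y as [[y1 y2] y3]. unfold pdist, pnorm, padd, pscale, c1, c2, c3; simpl.
  f_equal; ring. Qed.
Lemma pnorm_eq x : pnorm x = sqrt (c1 x ^ 2 + c2 x ^ 2 + c3 x ^ 2).
Proof. destruct x as [[x1 x2] x3]. unfold pnorm, c1, c2, c3; simpl. f_equal; ring. Qed.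

Lemma sqrt_ge_abs z s : 0 <= s -> Rabs z <= sqrt (z ^ 2 + s).
Proof. intros Hs. rewrite <- sqrt_Rsqr_abs. apply sqrt_le_1_alt. unfold Rsqr; simpl; nra. Qed.

Lemma dist_c1 x y : Rabs (c1 x - c1 y) <= pdist x y.
Proof. rewrite pdist_eq. replace ((c1 x - c1 y) ^ 2 + (c2 x - c2 y) ^ 2 + (c3 x - c3 y) ^ 2)
  with ((c1 x - c1 y) ^ 2 + ((c2 x - c2 y) ^ 2 + (c3 x - c3 y) ^ 2)) by ring. apply sqrt_ge_abs; apply Rplus_le_le_0_compat; apply pow2_ge_0. Qed.
Lemma dist_c2 x y : Rabs (c2 x - c2 y) <= pdist x y.
Proof. rewrite pdist_eq. replace ((c1 x - c1 y) ^ 2 + (c2 x - c2 y) ^ 2 + (c3 x - c3 y) ^ 2)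
  with ((c2 x - c2 y) ^ 2 + ((c1 x - c1 y) ^ 2 + (c3 x - c3 y) ^ 2)) by ring. apply sqrt_ge_abs; apply Rplus_le_le_0_compat; apply pow2_ge_0. Qed.
Lemma dist_c3 x y : Rabs (c3 x - c3 y) <= pdist x y.
Proof. rewrite pdist_eq. replace ((c1 x - c1 y) ^ 2 + (c2 x - c2 y) ^ 2 + (c3 x - c3 y) ^ 2)
  with ((c3 x - c3 y) ^ 2 + ((c1 x - c1 y) ^ 2 + (c2 x - c2 y) ^ 2)) by ring. apply sqrt_ge_abs; apply Rplus_le_le_0_compat; apply pow2_ge_0. Qed.
Lemma norm_c1 x : Rabs (c1 x) <= pnorm x.
Proof. rewrite pnorm_eq. replace (c1 x ^ 2 + c2 x ^ 2 + c3 x ^ 2) with (c1 x ^ 2 + (c2 x ^ 2 + c3 x ^ 2)) by ring.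
  apply sqrt_ge_abs; apply Rplus_le_le_0_compat; apply pow2_ge_0. Qed.
Lemma norm_c2 x : Rabs (c2 x) <= pnorm x.
Proof. rewrite pnorm_eq. replace (c1 x ^ 2 + c2 x ^ 2 + c3 x ^ 2) with (c2 x ^ 2 + (c1 x ^ 2 + c3 x ^ 2)) by ring.
  apply sqrt_ge_abs; apply Rplus_le_le_0_compat; apply pow2_ge_0. Qed.
Lemma norm_c3 x : Rabs (c3 x) <= pnorm x.
Proof. rewrite pnorm_eq. replace (c1 x ^ 2 + c2 x ^ 2 + c3 x ^ 2) with (c3 x ^ 2 + (c1 x ^ 2 + c2 x ^ 2)) by ring.
  apply sqrt_ge_abs; apply Rplus_le_le_0_compat; apply pow2_ge_0. Qed.

Lemma sq3_nonneg a b c : 0 <= a ^ 2 + b ^ 2 + c ^ 2.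
Proof. pose proof (pow2_ge_0 a); pose proof (pow2_ge_0 b); pose proof (pow2_ge_0 c); lra. Qed.

Lemma pdist_fW w x y : pdist (fW w x) (fW w y) = pdist x y / 2 ^ length w.
Proof.
  rewrite !pdist_eq, c1_fW, c2_fW, c3_fW, (c1_fW w y), (c2_fW w y), (c3_fW w y).
  assert (0 < 2 ^ length w) by (apply pow_lt; lra).
  replace ((c1 x / 2 ^ length w + c1 (fW w (P 0)) - (c1 y / 2 ^ length w + c1 (fW w (P 0)))) ^ 2 +
   (c2 x / 2 ^ length w + c2 (fW w (P 0)) - (c2 y / 2 ^ length w + c2 (fW w (P 0)))) ^ 2 +
   (c3 x / 2 ^ length w + c3 (fW w (P 0)) - (c3 y / 2 ^ length w + c3 (fW w (P 0)))) ^ 2)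
  with (((c1 x - c1 y) ^ 2 + (c2 x - c2 y) ^ 2 + (c3 x - c3 y) ^ 2) * (/ 2 ^ length w) ^ 2)
  by (field; lra).
  rewrite sqrt_mult_alt by apply sq3_nonneg. rewrite sqrt_pow2 by (left; apply Rinv_0_lt_compat; lra).
  unfold Rdiv; ring.
Qed.

Lemma pdist_0 x : pdist x (P 0) = pnorm x.
Proof. rewrite pdist_eq, pnorm_eq. unfold c1, c2, c3; simpl. f_equal; ring. Qed.

Lemma pdist_sym x y : pdist x y = pdist y x.
Proof. rewrite !pdist_eq. f_equal; ring. Qed.

Lemma pdist_nonneg x y : 0 <= pdist x y.
Proof. rewrite pdist_eq. apply sqrt_pos. Qed.

Definition Tset (x : pt) : Prop := 0 <= c1 x /\ 0 <= c2 x /\ c1 x + c2 x <= c3 x /\ c3 x <= a6.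

Lemma T_P i : Tset (P i).
Proof. pose proof a_pos. unfold Tset; rewrite c1_P, c2_P, c3_P; destruct i as [|[|[|]]]; unfold c1,c2,c3; simpl; lra. Qed.
Lemma T_fmap i x : Tset x -> Tset (fmap i x).
Proof. pose proof (T_P i). intros Hx. unfold Tset in *; rewrite !c1_fmap, !c2_fmap, !c3_fmap. lra. Qed.
Lemma T_fW w x : Tset x -> Tset (fW w x).
Proof. induction w; intros; [auto|rewrite fW_cons; apply T_fmap; auto]. Qed.

Definition ginv (i : nat) (x : pt) : pt :=
  ((2 * c1 x - c1 (P i), 2 * c2 x - c2 (P i)), 2 * c3 x - c3 (P i)).
Lemma fmap_ginv i x : fmap i (ginv i x) = x.
Proof. apply pt_ext; rewrite ?c1_fmap, ?c2_fmap, ?c3_fmap; unfold ginv, c1, c2, c3; simpl; field. Qed.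
Lemma ginv_fmap i x : ginv i (fmap i x) = x.
Proof. apply pt_ext; unfold ginv; rewrite ?c1_fmap, ?c2_fmap, ?c3_fmap; unfold c1 at 1; unfold c2 at 1; unfold c3 at 1; simpl; field. Qed.
Lemma fmap_eq_iff i x y : fmap i y = x <-> y = ginv i x.
Proof. split; intros H; [subst; rewrite ginv_fmap; auto| subst; apply fmap_ginv]. Qed.

Lemma inVm n X : In X (Vm n) <-> exists w j, In w (words n) /\ (j < 4)%nat /\ X = fW w (P j).
Proof.
  unfold Vm. rewrite nodup_In, in_flat_map. split.
  - intros [w [Hw Hx]]. unfold cell in Hx. apply in_map_iff in Hx as [j [<- Hj]].
    exists w, j; repeat split; auto. apply inL4; auto.
  - intros [w [j [Hw [Hj ->]]]]. exists w; split; auto. unfold cell. apply in_map_iff.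
    exists j; split; auto. apply inL4; auto.
Qed.

Lemma Vm_NoDup n : NoDup (Vm n).
Proof. apply NoDup_nodup. Qed.

Lemma P_in_V0 j : (j < 4)%nat -> In (P j) (Vm 0).
Proof. intros Hj. apply inVm. exists [], j; repeat split; auto. left; reflexivity. Qed.

Lemma fW_in_Vm n w j : In w (words n) -> (j < 4)%nat -> In (fW w (P j)) (Vm n).
Proof. intros; apply inVm; eauto 6. Qed.

Lemma Vm_mono n X : In X (Vm n) -> In X (Vm (S n)).
Proof.
  intros H. apply inVm in H as [w [j [Hw [Hj ->]]]]. apply inVm. exists (w ++ [j]), j.
  apply words_spec in Hw as [Hl Hi]. repeat split; auto.
  - apply words_spec. split; [rewrite length_app; simpl; lia|]. apply isw_app; split; auto.
    apply isw_cons; split; auto using isw_nil.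
  - rewrite fW_app. simpl. rewrite fmap_PP. reflexivity.
Qed.

Lemma Vm_mono_le n m X : (n <= m)%nat -> In X (Vm n) -> In X (Vm m).
Proof. intros H; induction H; auto using Vm_mono. Qed.

Lemma Vm_T n X : In X (Vm n) -> Tset X.
Proof. intros H. apply inVm in H as [w [j [_ [_ ->]]]]. apply T_fW, T_P. Qed.

Definition pz1 (i : nat) : Z := match i with 1%nat => 1%Z | _ => 0%Z end.
Definition pz2 (i : nat) : Z := match i with 2%nat => 1%Z | _ => 0%Z end.
Definition pz3 (i : nat) : Z := match i with 0%nat => 0%Z | _ => 1%Z end.
Lemma c1_Pz i : c1 (P i) = a6 * IZR (pz1 i).
Proof. destruct i as [|[|[|]]]; unfold c1; simpl; ring. Qed.
Lemma c2_Pz i : c2 (P i) = a6 * IZR (pz2 i).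
Proof. destruct i as [|[|[|]]]; unfold c2; simpl; ring. Qed.
Lemma c3_Pz i : c3 (P i) = a6 * IZR (pz3 i).
Proof. destruct i as [|[|[|]]]; unfold c3; simpl; ring. Qed.

Definition LAT (n : nat) (x : pt) : Prop := exists z1 z2 z3 : Z,
  c1 x = a6 * IZR z1 / 2 ^ n /\ c2 x = a6 * IZR z2 / 2 ^ n /\ c3 x = a6 * IZR z3 / 2 ^ n.

Lemma LAT_P j : LAT 0 (P j).
Proof. exists (pz1 j), (pz2 j), (pz3 j). rewrite c1_Pz, c2_Pz, c3_Pz. simpl. repeat split; field. Qed.

Lemma two_pow_IZR n : 2 ^ n = IZR (2 ^ Z.of_nat n).
Proof. rewrite <- pow_IZR. reflexivity. Qed.

Lemma LAT_fmap n i x : LAT n x -> LAT (S n) (fmap i x).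
Proof.
  intros [z1 [z2 [z3 [H1 [H2 H3]]]]].
  assert (0 < 2 ^ n) by (apply pow_lt; lra).
  exists (z1 + pz1 i * 2 ^ Z.of_nat n)%Z, (z2 + pz2 i * 2 ^ Z.of_nat n)%Z, (z3 + pz3 i * 2 ^ Z.of_nat n)%Z.
  rewrite c1_fmap, c2_fmap, c3_fmap, H1, H2, H3, c1_Pz, c2_Pz, c3_Pz, !plus_IZR, !mult_IZR, <- !two_pow_IZR.
  simpl pow. repeat split; field; lra.
Qed.

Lemma LAT_fW w j : LAT (length w) (fW w (P j)).
Proof. induction w; [apply LAT_P|]. rewrite fW_cons. apply LAT_fmap; auto. Qed.

Lemma LAT_Vm n X : In X (Vm n) -> LAT n X.
Proof. intros H. apply inVm in H as [w [j [Hw [_ ->]]]]. apply words_spec in Hw as [<- _]. apply LAT_fW. Qed.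

Lemma IZR_half (z k : Z) : IZR k = 2 * IZR z -> (k = 2 * z)%Z.
Proof. intros H. apply eq_IZR. rewrite mult_IZR. simpl. lra. Qed.

Lemma lat_aux a N u1 u2 y z : 0 < a -> 0 < N ->
  (a * u1 + a * u2) / 2 / N + a * y / N = a * z / N -> u1 + u2 = 2 * (z - y).
Proof.
  intros Ha HN H.
  assert (H' : a * ((u1 + u2) - 2 * (z - y)) / (2 * N) = 0).
  { replace (a * ((u1 + u2) - 2 * (z - y)) / (2 * N)) with ((a * u1 + a * u2) / 2 / N + a * y / N - a * z / N) by (field; lra). lra. }
  unfold Rdiv in H'. apply Rmult_integral in H' as [H'|H'].
  - apply Rmult_integral in H' as [H'|H']; lra.
  - exfalso. apply (Rinv_neq_0_compat (2 * N)); lra.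
Qed.

Lemma mid_not_LAT w a b : (a < 4)%nat -> (b < 4)%nat -> a <> b ->
  ~ LAT (length w) (fW w (fmap a (P b))).
Proof.
  intros Ha Hb Hab [z1 [z2 [z3 [H1 [H2 H3]]]]].
  destruct (LAT_fW w 0) as [y1 [y2 [y3 [G1 [G2 G3]]]]].
  rewrite c1_fW in H1; rewrite c2_fW in H2; rewrite c3_fW in H3.
  rewrite c1_fmap, c1_Pz, c1_Pz in H1. rewrite c2_fmap, c2_Pz, c2_Pz in H2. rewrite c3_fmap, c3_Pz, c3_Pz in H3.
  pose proof a_pos. assert (0 < 2 ^ length w) by (apply pow_lt; lra).
  assert (E1 : IZR (pz1 b + pz1 a) = 2 * IZR (z1 - y1)).
  { rewrite plus_IZR, minus_IZR. rewrite G1 in H1. apply (lat_aux a6 (2 ^ length w)); auto. }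
  assert (E2 : IZR (pz2 b + pz2 a) = 2 * IZR (z2 - y2)).
  { rewrite plus_IZR, minus_IZR. rewrite G2 in H2. apply (lat_aux a6 (2 ^ length w)); auto. }
  assert (E3 : IZR (pz3 b + pz3 a) = 2 * IZR (z3 - y3)).
  { rewrite plus_IZR, minus_IZR. rewrite G3 in H3. apply (lat_aux a6 (2 ^ length w)); auto. }
  apply IZR_half in E1. apply IZR_half in E2. apply IZR_half in E3.
  destruct a as [|[|[|[|]]]]; destruct b as [|[|[|[|]]]]; cbn [pz1 pz2 pz3] in E1, E2, E3; lia.
Qed.

Lemma mid_not_Vm w a b : (a < 4)%nat -> (b < 4)%nat -> a <> b ->
  ~ In (fW w (fmap a (P b))) (Vm (length w)).
Proof. intros Ha Hb Hab H. apply LAT_Vm in H. revert H. apply mid_not_LAT; auto. Qed.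

Lemma c1_ginv i x : c1 (ginv i x) = 2 * c1 x - c1 (P i).
Proof. reflexivity. Qed.
Lemma c2_ginv i x : c2 (ginv i x) = 2 * c2 x - c2 (P i).
Proof. reflexivity. Qed.
Lemma c3_ginv i x : c3 (ginv i x) = 2 * c3 x - c3 (P i).
Proof. reflexivity. Qed.

Ltac Pcoords := rewrite ?c1_P, ?c2_P, ?c3_P in *; unfold c1 at 2, c2 at 2, c3 at 2 in *; simpl in *.

Lemma G1 i x : Tset (ginv i x) -> Tset x.
Proof. intros H. rewrite <- (fmap_ginv i x). apply T_fmap; auto. Qed.

Lemma G2 i k : (i < 4)%nat -> (k < 4)%nat -> i <> k -> ~ Tset (ginv i (P k)).
Proof.
  intros Hi Hk Hik H. unfold Tset in H. rewrite c1_ginv, c2_ginv, c3_ginv in H.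
  rewrite !c1_Pz, !c2_Pz, !c3_Pz in H. pose proof a_pos.
  destruct i as [|[|[|[|]]]]; destruct k as [|[|[|[|]]]]; try lia; cbn [pz1 pz2 pz3] in H; lra.
Qed.

Lemma G3 i i' X : (i < 4)%nat -> (i' < 4)%nat -> i <> i' ->
  Tset (ginv i X) -> Tset (ginv i' X) -> X = fmap i (P i').
Proof.
  intros Hi Hi' Hii H H'. unfold Tset in H, H'. rewrite c1_ginv, c2_ginv, c3_ginv in H, H'.
  apply pt_ext; rewrite ?c1_fmap, ?c2_fmap, ?c3_fmap;
  rewrite !c1_Pz, !c2_Pz, !c3_Pz in *; pose proof a_pos;
  destruct i as [|[|[|[|]]]]; destruct i' as [|[|[|[|]]]]; try lia; cbn [pz1 pz2 pz3] in *; lra.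
Qed.

Lemma sumL4_single (F : nat -> R) i : (i < 4)%nat -> (forall j, (j < 4)%nat -> j <> i -> F j = 0) ->
  sumR F L4 = F i.
Proof.
  intros Hi H. rewrite sumL4.
  destruct i as [|[|[|[|]]]]; try lia;
  rewrite ?(H 0%nat) by lia; rewrite ?(H 1%nat) by lia; rewrite ?(H 2%nat) by lia; rewrite ?(H 3%nat) by lia; ring.
Qed.

Lemma sumL4_double (F : nat -> R) i i' : (i < 4)%nat -> (i' < 4)%nat -> i <> i' ->
  (forall j, (j < 4)%nat -> j <> i -> j <> i' -> F j = 0) -> sumR F L4 = F i + F i'.
Proof.
  intros Hi Hi' Hii H. rewrite sumL4.
  destruct i as [|[|[|[|]]]]; destruct i' as [|[|[|[|]]]]; try lia;
  rewrite ?(H 0%nat) by lia; rewrite ?(H 1%nat) by lia; rewrite ?(H 2%nat) by lia; rewrite ?(H 3%nat) by lia; ring.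
Qed.

Lemma sumR_ge_term {A} (F : A -> R) l a : (forall x, In x l -> 0 <= F x) -> In a l -> F a <= sumR F l.
Proof.
  induction l as [|b l IH]; intros H Ha; [destruct Ha|]. rewrite sumR_cons.
  destruct Ha as [->|Ha].
  - assert (0 <= sumR F l) by (apply sumR_nonneg; auto with datatypes). lra.
  - assert (0 <= F b) by auto with datatypes. assert (F a <= sumR F l) by (apply IH; auto with datatypes). lra.
Qed.

Lemma sumR_nonzero {A} (F : A -> R) l : sumR F l <> 0 -> exists x, In x l /\ F x <> 0.
Proof.
  intros H. apply NNPP. intros H'. apply H. apply sumR_zero. intros x Hx.
  apply NNPP. intros Hn. apply H'. eauto.
Qed.

Lemma ind_01 x y : ind x y = 0 \/ ind x y = 1.
Proof. unfold ind; destruct pt_eq_dec; auto. Qed.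
Lemma ind_nonneg x y : 0 <= ind x y.
Proof. unfold ind; destruct pt_eq_dec; lra. Qed.
Lemma ind_eq x : ind x x = 1.
Proof. unfold ind; destruct pt_eq_dec; congruence. Qed.
Lemma ind_neq x y : x <> y -> ind x y = 0.
Proof. unfold ind; destruct pt_eq_dec; congruence. Qed.

Definition cnt (n : nat) (X : pt) : R :=
  sumR (fun w => sumR (fun j => ind (fW w (P j)) X) L4) (words n).

Lemma ind_fmap i Y X : ind (fmap i Y) X = ind Y (ginv i X).
Proof. unfold ind. destruct (pt_eq_dec (fmap i Y) X) as [e|e], (pt_eq_dec Y (ginv i X)) as [e'|e'];
  auto; exfalso; [apply e'|apply e]; apply fmap_eq_iff; auto. Qed.

Lemma cnt_S n X : cnt (S n) X = sumR (fun i => cnt n (ginv i X)) L4.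
Proof.
  unfold cnt. rewrite words_cons_sum. apply sumR_ext; intros i _.
  apply sumR_ext; intros w _. apply sumR_ext; intros j _. rewrite fW_cons. apply ind_fmap.
Qed.

Lemma cnt_0 X : cnt 0 X = sumR (fun j => ind (P j) X) L4.
Proof. unfold cnt. change (words 0) with [@nil nat]. rewrite sumR_cons, sumR_nil, Rplus_0_r. reflexivity. Qed.

Lemma ind_P_P j k : (j < 4)%nat -> (k < 4)%nat -> ind (P j) (P k) = if Nat.eq_dec j k then 1 else 0.
Proof. intros. destruct (Nat.eq_dec j k); [subst; apply ind_eq|]. apply ind_neq. intros E; apply P_inj in E; auto. Qed.

Lemma cnt_spec n : forall X,
  (forall k, (k < 4)%nat -> X = P k -> cnt n X = 1) /\
  (~ Tset X -> cnt n X = 0) /\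
  (Tset X -> (forall k, (k < 4)%nat -> X <> P k) -> cnt n X = 0 \/ cnt n X = 2).
Proof.
  induction n; intros X; [rewrite !cnt_0|rewrite !cnt_S]; (split; [|split]).
  - intros k Hk ->. rewrite (sumL4_single _ k Hk). apply ind_eq.
    intros j Hj Hjk. rewrite ind_P_P by auto. destruct Nat.eq_dec; congruence.
  - intros HT. apply sumR_zero. intros j Hj. apply ind_neq. intros <-. apply HT, T_P.
  - intros HT Hv. left. apply sumR_zero. intros j Hj. apply ind_neq. intros <-. apply inL4 in Hj. eapply Hv; eauto.
  - intros k Hk ->. rewrite (sumL4_single _ k Hk).
    + replace (ginv k (P k)) with (P k). apply (proj1 (IHn (P k)) k); auto.
      rewrite <- (fmap_PP k) at 2. rewrite ginv_fmap. reflexivity.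
    + intros j Hj Hjk. apply IHn. apply G2; auto.
  - intros HT. apply sumR_zero. intros i Hi. apply IHn. intros H. apply HT. eapply G1; eauto.
  - intros HT Hv.
    destruct (classic (exists i, (i < 4)%nat /\ Tset (ginv i X))) as [[i [Hi Ti]]|Hno].
    + destruct (classic (exists i', (i' < 4)%nat /\ i' <> i /\ Tset (ginv i' X))) as [[i' [Hi' [Hii Ti']]]|Hno'].
      * right. assert (EX : X = fmap i (P i')) by (apply G3; auto).
        rewrite (sumL4_double _ i i'); auto.
        -- assert (E1 : ginv i X = P i') by (rewrite EX; apply ginv_fmap).
           assert (E2 : ginv i' X = P i) by (rewrite EX, fmap_sym; apply ginv_fmap).
           rewrite E1, E2. rewrite (proj1 (IHn (P i')) i'), (proj1 (IHn (P i)) i); try ring; auto.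
        -- intros j Hj Hji Hji'. apply IHn. intros Tj.
           assert (X = fmap i (P j)) by (apply G3; auto).
           assert (P i' = P j) by (eapply fW_inj with (w := [i]); simpl; congruence).
           apply P_inj in H0; auto.
      * rewrite (sumL4_single _ i Hi).
        -- apply IHn; auto. intros k Hk E.
           assert (EX : X = fmap i (P k)) by (rewrite <- E, fmap_ginv; auto).
           destruct (Nat.eq_dec k i) as [->|Hki].
           ++ apply (Hv i Hi). rewrite EX, fmap_PP; auto.
           ++ apply Hno'. exists k; split; [auto|split; [auto|]]. rewrite EX, fmap_sym, ginv_fmap. apply T_P.
        -- intros j Hj Hji. apply IHn. intros Tj. apply Hno'. exists j; auto.
    + left. apply sumR_zero. intros i Hi. apply IHn. intros Ti. apply Hno. exists i; split; auto. apply inL4; auto.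
Qed.

Lemma cnt_pos n X : In X (Vm n) -> 1 <= cnt n X.
Proof.
  intros H. apply inVm in H as [w [j [Hw [Hj ->]]]]. unfold cnt.
  eapply Rle_trans; [|apply sumR_ge_term with (a := w); auto].
  - eapply Rle_trans; [|apply sumR_ge_term with (a := j)]. rewrite ind_eq; lra.
    intros; apply ind_nonneg. apply inL4; auto.
  - intros; apply sumR_nonneg; intros; apply ind_nonneg.
Qed.

Lemma cnt_two n X : In X (Vm n) -> ~ In X (Vm 0) -> cnt n X = 2.
Proof.
  intros H H0. destruct (cnt_spec n X) as [_ [_ C]].
  assert (1 <= cnt n X) by (apply cnt_pos; auto).
  destruct C as [C|C]; [apply (Vm_T n); auto| |lra|auto].
  intros k Hk ->. apply H0. apply P_in_V0; auto.
Qed.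

Definition cnt2 (n : nat) (x y : pt) : R :=
  sumR (fun w => sumR (fun j => sumR (fun k =>
    if Nat.eq_dec j k then 0 else ind (fW w (P j)) x * ind (fW w (P k)) y) L4) L4) (words n).

Lemma cnt2_S n x y : cnt2 (S n) x y = sumR (fun i => cnt2 n (ginv i x) (ginv i y)) L4.
Proof.
  unfold cnt2. rewrite words_cons_sum. apply sumR_ext; intros i _.
  apply sumR_ext; intros w _. apply sumR_ext; intros j _. apply sumR_ext; intros k _.
  rewrite !fW_cons, !ind_fmap. reflexivity.
Qed.

Lemma cnt2_0 x y : cnt2 0 x y = sumR (fun j => sumR (fun k =>
    if Nat.eq_dec j k then 0 else ind (P j) x * ind (P k) y) L4) L4.
Proof. unfold cnt2. change (words 0) with [@nil nat]. rewrite sumR_cons, sumR_nil, Rplus_0_r. reflexivity. Qed.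

Lemma cnt2_diag n x : cnt2 n x x = 0.
Proof.
  unfold cnt2. apply sumR_zero; intros w _. apply sumR_zero; intros j Hj. apply sumR_zero; intros k Hk.
  destruct Nat.eq_dec as [|Hjk]; auto. unfold ind.
  destruct (pt_eq_dec (fW w (P j)) x), (pt_eq_dec (fW w (P k)) x); try ring.
  exfalso. apply Hjk. apply inL4 in Hj; apply inL4 in Hk. apply P_inj; auto. apply (fW_inj w). congruence.
Qed.

Lemma sumL4_01 (F : nat -> R) : (forall i, (i < 4)%nat -> F i = 0 \/ F i = 1) ->
  (forall i i', (i < 4)%nat -> (i' < 4)%nat -> F i <> 0 -> F i' <> 0 -> i = i') ->
  sumR F L4 = 0 \/ sumR F L4 = 1.
Proof.
  intros H01 Hu. destruct (classic (exists i, (i < 4)%nat /\ F i <> 0)) as [[i [Hi Fi]]|Hno].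
  - rewrite (sumL4_single _ i Hi). apply H01; auto.
    intros j Hj Hji. apply NNPP; intros Fj. apply Hji. eapply Hu; eauto.
  - left. apply sumR_zero. intros i Hi. apply NNPP. intros Fi. apply Hno. exists i; split; auto. apply inL4; auto.
Qed.

Lemma cnt2_spec n : forall x y, (cnt2 n x y = 0 \/ cnt2 n x y = 1) /\ (cnt2 n x y <> 0 -> Tset x /\ Tset y).
Proof.
  induction n; intros x y.
  - rewrite cnt2_0.
    destruct (classic (exists j, (j < 4)%nat /\ x = P j)) as [[j0 [Hj0 ->]]|Hx].
    + rewrite (sumL4_single _ j0 Hj0).
      2:{ intros j Hj Hjj. apply sumR_zero. intros k _. destruct Nat.eq_dec; [ring|].
          rewrite ind_P_P by auto. destruct (Nat.eq_dec j j0); [congruence|ring]. }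
      rewrite ind_eq.
      destruct (classic (exists k, (k < 4)%nat /\ y = P k)) as [[k0 [Hk0 ->]]|Hy].
      * rewrite (sumL4_single _ k0 Hk0).
        2:{ intros k Hk Hkk. destruct Nat.eq_dec; [ring|]. rewrite ind_P_P by auto. destruct (Nat.eq_dec k k0); [congruence|ring]. }
        rewrite ind_eq. split; [destruct Nat.eq_dec; [left|right]; ring|]. intros _; split; apply T_P.
      * rewrite sumR_zero; [split; [left; auto|intros []; auto]|].
        intros k Hk. destruct Nat.eq_dec; [ring|]. rewrite ind_neq; [ring|]. intros E; apply Hy.
        exists k; split; auto. apply inL4; auto.
    + rewrite sumR_zero; [split; [left; auto|intros []; auto]|].
      intros j Hj. apply sumR_zero. intros k _. destruct Nat.eq_dec; [ring|]. rewrite ind_neq; [ring|].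
      intros E; apply Hx. exists j; split; auto. apply inL4; auto.
  - rewrite cnt2_S. split.
    + apply sumL4_01. intros i _; apply IHn.
      intros i i' Hi Hi' Ni Ni'. apply NNPP; intros Hii.
      destruct (proj2 (IHn _ _) Ni) as [Tx Ty]. destruct (proj2 (IHn _ _) Ni') as [Tx' Ty'].
      assert (Ex := G3 i i' x Hi Hi' Hii Tx Tx'). assert (Ey := G3 i i' y Hi Hi' Hii Ty Ty').
      apply Ni. rewrite Ex, <- Ey. apply cnt2_diag.
    + intros Hn. apply sumR_nonzero in Hn as [i [Hi Hn]]. apply IHn in Hn as [Tx Ty].
      split; eapply G1; eauto.
Qed.

Lemma inb_In X l : inb X l = true <-> In X l.
Proof. unfold inb. rewrite existsb_exists. split.
  - intros [Y [HY E]]. destruct pt_eq_dec; [subst; auto|discriminate].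
  - intros H. exists X; split; auto. destruct pt_eq_dec; congruence. Qed.

Lemma in_cell X w : In X (cell w) <-> exists j, (j < 4)%nat /\ X = fW w (P j).
Proof. unfold cell. rewrite in_map_iff. split.
  - intros [j [<- Hj]]. exists j; split; auto. apply inL4; auto.
  - intros [j [Hj ->]]. exists j; split; auto. apply inL4; auto. Qed.

Lemma adj_iff n x y : adj n x y = true <-> x <> y /\ exists w j k, In w (words n) /\ (j < 4)%nat /\ (k < 4)%nat /\
  x = fW w (P j) /\ y = fW w (P k).
Proof.
  unfold adj. rewrite Bool.andb_true_iff, existsb_exists. split.
  - intros [H1 [w [Hw H2]]]. apply Bool.andb_true_iff in H2 as [Hx Hy].
    apply inb_In, in_cell in Hx as [j [Hj ->]]. apply inb_In, in_cell in Hy as [k [Hk ->]].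
    split; [destruct pt_eq_dec; [discriminate|auto]|]. exists w, j, k; auto.
  - intros [Hxy [w [j [k [Hw [Hj [Hk [-> ->]]]]]]]]. split.
    + destruct pt_eq_dec; [contradiction|reflexivity].
    + exists w; split; auto. apply Bool.andb_true_iff; split; apply inb_In, in_cell; eauto.
Qed.

Lemma adj_irrefl n x : adj n x x = false.
Proof. unfold adj. destruct pt_eq_dec; [reflexivity|congruence]. Qed.

Lemma adj_sym n x y : adj n x y = adj n y x.
Proof.
  apply Bool.eq_iff_eq_true. rewrite !adj_iff. split; intros [H [w [j [k [? [? [? [? ?]]]]]]]];
  split; auto; exists w, k, j; auto.
Qed.

Lemma cnt2_adj n x y : cnt2 n x y = if adj n x y then 1 else 0.
Proof.
  destruct (adj n x y) eqn:E.
  - apply adj_iff in E as [Hxy [w [j [k [Hw [Hj [Hk [-> ->]]]]]]]].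
    destruct (proj1 (cnt2_spec n (fW w (P j)) (fW w (P k)))) as [C|C]; auto.
    exfalso. assert (Hjk : j <> k) by (intros ->; auto).
    assert (1 <= cnt2 n (fW w (P j)) (fW w (P k))); [|lra].
    unfold cnt2. eapply Rle_trans; [|apply sumR_ge_term with (a := w); auto].
    eapply Rle_trans; [|apply sumR_ge_term with (a := j); [|apply inL4; auto]].
    eapply Rle_trans; [|apply sumR_ge_term with (a := k); [|apply inL4; auto]].
    + destruct Nat.eq_dec; [congruence|]. rewrite !ind_eq; lra.
    + intros; destruct Nat.eq_dec; [lra|]. pose proof (ind_nonneg (fW w (P j)) (fW w (P j))).
      apply Rmult_le_pos; apply ind_nonneg.
    + intros; apply sumR_nonneg; intros; destruct Nat.eq_dec; [lra|]; apply Rmult_le_pos; apply ind_nonneg.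
    + intros; apply sumR_nonneg; intros; apply sumR_nonneg; intros; destruct Nat.eq_dec; [lra|]; apply Rmult_le_pos; apply ind_nonneg.
  - unfold cnt2. apply sumR_zero; intros w Hw. apply sumR_zero; intros j Hj. apply sumR_zero; intros k Hk.
    destruct Nat.eq_dec as [|Hjk]; [reflexivity|]. unfold ind.
    destruct (pt_eq_dec (fW w (P j)) x), (pt_eq_dec (fW w (P k)) y); try ring.
    exfalso. assert (adj n x y = true); [|congruence]. apply adj_iff. split.
    + intros Exy. apply Hjk. apply inL4 in Hj; apply inL4 in Hk. apply P_inj; auto. apply (fW_inj w). congruence.
    + exists w, j, k; repeat split; auto; apply inL4; auto.
Qed.

Lemma upairs_sum (r : pt -> pt -> bool) (F : pt -> pt -> R) l :
  (forall x, r x x = false) -> (forall x y, r x y = r y x) -> (forall x y, F x y = F y x) ->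
  sumR (fun p => F (fst p) (snd p)) (filter (fun p => r (fst p) (snd p)) (upairs l)) =
  / 2 * sumR (fun x => sumR (fun y => if r x y then F x y else 0) l) l.
Proof.
  intros Hirr Hsym HF. induction l as [|x t IH].
  - unfold sumR; simpl; ring.
  - simpl upairs. rewrite filter_app, sumR_app, IH. rewrite sumR_filter, sumR_map. cbn [fst snd].
    rewrite sumR_cons. rewrite sumR_cons, Hirr.
    rewrite (sumR_ext (fun x0 => sumR (fun y => if r x0 y then F x0 y else 0) (x :: t))
              (fun x0 => (if r x0 x then F x0 x else 0) + sumR (fun y => if r x0 y then F x0 y else 0) t))
      by (intros; rewrite sumR_cons; reflexivity).
    rewrite sumR_plus.
    rewrite (sumR_ext (fun x0 => if r x0 x then F x0 x else 0) (fun y => if r x y then F x y else 0))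
      by (intros; rewrite Hsym, HF; reflexivity).
    field.
Qed.

Lemma sum_ind (l : list pt) (z : pt) (phi : pt -> R) :
  NoDup l -> In z l -> sumR (fun x => ind z x * phi x) l = phi z.
Proof. intros. rewrite <- (sum_delta l z phi) by auto. apply sumR_ext; intros. unfold ind; destruct pt_eq_dec; ring. Qed.

Definition e4 (p q : nat -> R) : R :=
  (p 0%nat - p 1%nat) * (q 0%nat - q 1%nat) + (p 0%nat - p 2%nat) * (q 0%nat - q 2%nat) +
  (p 0%nat - p 3%nat) * (q 0%nat - q 3%nat) + (p 1%nat - p 2%nat) * (q 1%nat - q 2%nat) +
  (p 1%nat - p 3%nat) * (q 1%nat - q 3%nat) + (p 2%nat - p 3%nat) * (q 2%nat - q 3%nat).

Lemma Eraw_cells n u v : Eraw n u v =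
  sumR (fun w => e4 (fun j => u (fW w (P j))) (fun j => v (fW w (P j)))) (words n).
Proof.
  unfold Eraw.
  rewrite (upairs_sum (adj n) (fun x y => (u x - u y) * (v x - v y))); [|apply adj_irrefl|apply adj_sym|intros; ring].
  rewrite (sumR_ext _ (fun x => sumR (fun y => cnt2 n x y * ((u x - u y) * (v x - v y))) (Vm n))).
  2:{ intros x _. apply sumR_ext; intros y _. rewrite cnt2_adj. destruct adj; ring. }
  unfold cnt2.
  rewrite (sumR_ext _ (fun x => sumR (fun w => sumR (fun j => sumR (fun k => sumR (fun y =>
      (if Nat.eq_dec j k then 0 else ind (fW w (P j)) x * ind (fW w (P k)) y) * ((u x - u y) * (v x - v y))) (Vm n)) L4) L4) (words n))).
  2:{ intros x _. rewrite (sumR_ext _ (fun y => sumR (fun w => sumR (fun j => sumR (fun k =>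
      (if Nat.eq_dec j k then 0 else ind (fW w (P j)) x * ind (fW w (P k)) y) * ((u x - u y) * (v x - v y))) L4) L4) (words n))).
      2:{ intros y _. rewrite <- sumR_scal_r. apply sumR_ext; intros w _. rewrite <- sumR_scal_r.
          apply sumR_ext; intros j _. rewrite <- sumR_scal_r. reflexivity. }
      rewrite sumR_swap. apply sumR_ext; intros w _. rewrite sumR_swap. apply sumR_ext; intros j _.
      rewrite sumR_swap. reflexivity. }
  rewrite sumR_swap, <- sumR_scal. apply sumR_ext; intros w Hw.
  transitivity (/ 2 * sumR (fun j => sumR (fun k => if Nat.eq_dec j k then 0 else
      (u (fW w (P j)) - u (fW w (P k))) * (v (fW w (P j)) - v (fW w (P k)))) L4) L4).
  { f_equal. rewrite sumR_swap. apply sumR_ext; intros j Hj. rewrite sumR_swap. apply sumR_ext; intros k Hk.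
      destruct Nat.eq_dec. { apply sumR_zero; intros; apply sumR_zero; intros; ring. }
      rewrite (sumR_ext _ (fun x => ind (fW w (P j)) x * sumR (fun y => ind (fW w (P k)) y * ((u x - u y) * (v x - v y))) (Vm n))).
      2:{ intros x _. rewrite <- sumR_scal. apply sumR_ext; intros; ring. }
      rewrite sum_ind; [|apply Vm_NoDup|apply fW_in_Vm; auto; apply inL4; auto].
      apply sum_ind; [apply Vm_NoDup|apply fW_in_Vm; auto; apply inL4; auto]. }
  rewrite !sumL4. unfold e4. repeat (destruct Nat.eq_dec; try lia). field.
Qed.

Lemma NoDup_remove_gen {A} (dec : forall x y : A, {x = y} + {x <> y}) a l :
  NoDup l -> NoDup (remove dec a l).
Proof.
  induction l as [|b l IH]; intros H; simpl; [constructor|]. inversion H; subst.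
  destruct (dec a b); auto. constructor; auto. intros Hin. apply in_remove in Hin as [Hin _]; auto.
Qed.

Lemma sumR_remove {A} (dec : forall x y : A, {x = y} + {x <> y}) (F : A -> R) l a :
  NoDup l -> In a l -> sumR F l = F a + sumR F (remove dec a l).
Proof.
  induction l as [|b l IH]; intros Hnd Hin; [destruct Hin|]. inversion Hnd; subst. simpl remove.
  destruct (dec a b) as [->|Hab].
  - rewrite notin_remove by auto. apply sumR_cons.
  - destruct Hin as [->|Hin]; [congruence|]. rewrite !sumR_cons, IH; auto. ring.
Qed.

Lemma sum_two {A} (dec : forall x y : A, {x = y} + {x <> y}) l (H : A -> R) p1 p2 :
  NoDup l -> In p1 l -> In p2 l -> p1 <> p2 ->
  (forall p, In p l -> p <> p1 -> p <> p2 -> H p = 0) -> sumR H l = H p1 + H p2.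
Proof.
  intros Hnd H1 H2 H12 Hz. rewrite (sumR_remove dec H l p1) by auto.
  rewrite (sumR_remove dec H _ p2); [| apply NoDup_remove_gen; auto| apply in_in_remove; auto].
  rewrite (sumR_zero H (remove dec p2 (remove dec p1 l))); [ring|].
  intros p Hp. apply in_remove in Hp as [Hp Hp2]. apply in_remove in Hp as [Hp Hp1]. auto.
Qed.

Lemma two_reps {A} (dec : forall x y : A, {x = y} + {x <> y}) l (chi : A -> R) p1 p2 :
  NoDup l -> (forall p, In p l -> 0 <= chi p) -> sumR chi l = chi p1 + chi p2 ->
  In p1 l -> In p2 l -> p1 <> p2 -> forall p, In p l -> p <> p1 -> p <> p2 -> chi p = 0.
Proof.
  intros Hnd Hpos Hs H1 H2 H12 p Hp Hp1 Hp2.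
  rewrite (sumR_remove dec chi l p1) in Hs by auto.
  rewrite (sumR_remove dec chi _ p2) in Hs; [| apply NoDup_remove_gen; auto| apply in_in_remove; auto].
  assert (Hin : In p (remove dec p2 (remove dec p1 l))) by (apply in_in_remove; auto; apply in_in_remove; auto).
  assert (chi p <= sumR chi (remove dec p2 (remove dec p1 l))).
  { apply sumR_ge_term; auto. intros x Hx. apply in_remove in Hx as [Hx _]. apply in_remove in Hx as [Hx _]. auto. }
  assert (0 <= chi p) by auto. lra.
Qed.

Lemma NoDup_flat_map_gen {A B} (g : A -> list B) l :
  NoDup l -> (forall x, In x l -> NoDup (g x)) ->
  (forall x y z, In x l -> In y l -> In z (g x) -> In z (g y) -> x = y) -> NoDup (flat_map g l).
Proof.
  induction l as [|x t IH]; intros Hnd Hg Hd; simpl; [constructor|]. inversion Hnd; subst.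
  apply NoDup_app; auto with datatypes.
  - apply IH; auto with datatypes. intros; eapply Hd; eauto with datatypes.
  - intros z Hz Hz'. apply in_flat_map in Hz' as [y [Hy Hz']].
    assert (x = y) by (eapply Hd; eauto with datatypes). subst. contradiction.
Qed.

Lemma NoDup_map_inj {A B} (f : A -> B) l : (forall x y, f x = f y -> x = y) -> NoDup l -> NoDup (map f l).
Proof. intros Hf; induction 1; simpl; constructor; auto. intros Hin. apply in_map_iff in Hin as [y [E Hy]].
  apply Hf in E; subst; contradiction. Qed.

Lemma NoDup_L4 : NoDup L4.
Proof. repeat constructor; simpl; intuition lia. Qed.

Lemma words_NoDup n : NoDup (words n).
Proof.
  induction n; [repeat constructor; simpl; auto|]. cbn [words].
  apply NoDup_flat_map_gen; auto.
  - intros w _. apply NoDup_map_inj; [intros x y E; injection E; auto|apply NoDup_L4].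
  - intros x y z _ _ Hx Hy. apply in_map_iff in Hx as [i [<- _]]. apply in_map_iff in Hy as [i' [E _]].
    injection E; auto.
Qed.

Definition pairsL (n : nat) : list (list nat * nat) := flat_map (fun w => map (fun j => (w, j)) L4) (words n).

Lemma pairsL_NoDup n : NoDup (pairsL n).
Proof.
  apply NoDup_flat_map_gen; [apply words_NoDup| |].
  - intros w _. apply NoDup_map_inj; [intros x y E; injection E; auto|apply NoDup_L4].
  - intros x y z _ _ Hx Hy. apply in_map_iff in Hx as [i [<- _]]. apply in_map_iff in Hy as [i' [E _]].
    injection E; auto.
Qed.

Lemma in_pairsL n p : In p (pairsL n) <-> In (fst p) (words n) /\ (snd p < 4)%nat.
Proof.
  unfold pairsL. rewrite in_flat_map. split.
  - intros [w [Hw Hp]]. apply in_map_iff in Hp as [j [<- Hj]]. simpl. split; auto. apply inL4; auto.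
  - destruct p as [w j]; cbn [fst snd]. intros [Hw Hj]. exists w; split; auto. apply in_map_iff. exists j; split; auto.
    apply inL4; auto.
Qed.

Lemma sum_pairsL n (F : list nat -> nat -> R) :
  sumR (fun w => sumR (fun j => F w j) L4) (words n) = sumR (fun p => F (fst p) (snd p)) (pairsL n).
Proof. unfold pairsL. rewrite sumR_flat_map. apply sumR_ext; intros w _. rewrite sumR_map. reflexivity. Qed.

Definition pdec : forall x y : list nat * nat, {x = y} + {x <> y}.
Proof. decide equality; [apply Nat.eq_dec| apply list_eq_dec, Nat.eq_dec]. Defined.

Lemma reps2 n Y w1 j1 w2 j2 : cnt n Y = 2 ->
  In w1 (words n) -> (j1 < 4)%nat -> Y = fW w1 (P j1) ->
  In w2 (words n) -> (j2 < 4)%nat -> Y = fW w2 (P j2) -> (w1, j1) <> (w2, j2) ->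
  forall w j, In w (words n) -> (j < 4)%nat -> Y = fW w (P j) -> (w, j) = (w1, j1) \/ (w, j) = (w2, j2).
Proof.
  intros Hc Hw1 Hj1 E1 Hw2 Hj2 E2 Hne w j Hw Hj E.
  destruct (pdec (w, j) (w1, j1)); auto. destruct (pdec (w, j) (w2, j2)); auto. exfalso.
  assert (Z := two_reps pdec (pairsL n) (fun p => ind (fW (fst p) (P (snd p))) Y) (w1, j1) (w2, j2)
     (pairsL_NoDup n)).
  assert (ind (fW w (P j)) Y = 0).
  { apply (Z) with (p := (w, j)); auto.
    - intros; apply ind_nonneg.
    - cbv beta. rewrite <- (sum_pairsL n (fun w j => ind (fW w (P j)) Y)). fold (cnt n Y). cbn [fst snd]. rewrite Hc, <- E1, <- E2, ind_eq. ring.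
    - apply in_pairsL; auto.
    - apply in_pairsL; auto.
    - apply in_pairsL; auto. }
  rewrite <- E, ind_eq in H. lra.
Qed.

Lemma sum_reps2 n Y w1 j1 w2 j2 (G : list nat -> nat -> R) : cnt n Y = 2 ->
  In w1 (words n) -> (j1 < 4)%nat -> Y = fW w1 (P j1) ->
  In w2 (words n) -> (j2 < 4)%nat -> Y = fW w2 (P j2) -> (w1, j1) <> (w2, j2) ->
  sumR (fun w => sumR (fun j => ind (fW w (P j)) Y * G w j) L4) (words n) = G w1 j1 + G w2 j2.
Proof.
  intros Hc Hw1 Hj1 E1 Hw2 Hj2 E2 Hne.
  rewrite sum_pairsL. rewrite (sum_two pdec _ _ (w1, j1) (w2, j2)); auto.
  - simpl. rewrite <- E1, <- E2, !ind_eq. ring.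
  - apply pairsL_NoDup.
  - apply in_pairsL; auto.
  - apply in_pairsL; auto.
  - intros [w j] Hp H1 H2. apply in_pairsL in Hp as [Hw Hj]. simpl in *.
    destruct (pt_eq_dec (fW w (P j)) Y) as [E|E].
    + destruct (reps2 n Y w1 j1 w2 j2 Hc Hw1 Hj1 E1 Hw2 Hj2 E2 Hne w j Hw Hj (eq_sym E)); congruence.
    + rewrite ind_neq; auto. ring.
Qed.

Lemma abs_le_elim x a : Rabs x <= a -> - a <= x <= a.
Proof. unfold Rabs; destruct Rcase_abs; lra. Qed.
Lemma abs_le_intro x a : - a <= x <= a -> Rabs x <= a.
Proof. unfold Rabs; destruct Rcase_abs; lra. Qed.

Lemma div_nonneg a b : 0 <= a -> 0 < b -> 0 <= a / b.
Proof. intros; unfold Rdiv; apply Rmult_le_pos; [auto|left; apply Rinv_0_lt_compat; auto]. Qed.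

Lemma K_fmap K (HK : is_attractor K) i y : (i < 4)%nat -> K y -> K (fmap i y).
Proof. intros Hi Hy. destruct HK as [_ [_ [_ H]]]. apply H. exists i, y; auto. Qed.

Lemma K_fW K (HK : is_attractor K) w y : isw w -> K y -> K (fW w y).
Proof. induction w as [|i w IH]; intros Hw Hy; [auto|]. apply isw_cons in Hw as [Hi Hw].
  rewrite fW_cons. apply K_fmap; auto. Qed.

Lemma fW_repeat_P j n : fW (repeat j n) (P j) = P j.
Proof. induction n; [reflexivity|]. simpl repeat. rewrite fW_cons, IHn. apply fmap_PP. Qed.

Lemma K_P K (HK : is_attractor K) j : (j < 4)%nat -> K (P j).
Proof.
  intros Hj. pose proof HK as [[x0 Hx0] [_ [Hcl _]]].
  apply (Hcl (fun n => fW (repeat j n) x0)).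
  - intros n. apply K_fW; auto. intros i Hi. apply repeat_spec in Hi. subst; auto.
  - intros eps Heps. destruct (cv_pow_half (pdist x0 (P j)) eps Heps) as [N HN]. exists N. intros n Hn.
    specialize (HN n Hn). unfold R_dist in *. rewrite <- (fW_repeat_P j n) at 1. rewrite pdist_fW, repeat_length.
    rewrite Rminus_0_r in *. rewrite Rabs_right; [|apply Rle_ge, div_nonneg; [apply pdist_nonneg|apply pow_lt; lra]].
    rewrite Rabs_right in HN; [auto|apply Rle_ge, div_nonneg; [apply pdist_nonneg|apply pow_lt; lra]].
Qed.

Lemma K_address K (HK : is_attractor K) x : K x -> forall n, exists w y, In w (words n) /\ K y /\ x = fW w y.
Proof.
  intros Hx n. induction n.
  - exists [], x. split; [left; reflexivity|auto].
  - destruct IHn as [w [y [Hw [Hy E]]]]. destruct HK as [_ [_ [_ H]]]. apply H in Hy as [i [y' [Hi [Hy' ->]]]].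
    exists (w ++ [i]), y'. split; [|split; auto].
    + apply words_spec in Hw as [Hl Hw]. apply words_spec. split; [rewrite length_app; simpl; lia|].
      apply isw_app; split; auto. apply isw_cons; split; auto using isw_nil.
    + rewrite E, fW_app. reflexivity.
Qed.

Lemma words_isw n w : In w (words n) -> isw w.
Proof. intros H; apply words_spec in H; tauto. Qed.
Lemma words_len n w : In w (words n) -> length w = n.
Proof. intros H; apply words_spec in H; tauto. Qed.

Lemma contK_fW K g w : contK K g -> (forall y, K y -> K (fW w y)) -> contK K (fun x => g (fW w x)).
Proof.
  intros Hg HKw x Hx eps Heps. destruct (Hg (fW w x) (HKw x Hx) eps Heps) as [d [Hd H]].
  exists d; split; auto. intros y Hy Hyx. apply H; auto. rewrite pdist_fW.
  assert (1 <= 2 ^ length w) by (apply pow_R1_Rle; lra).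
  apply Rle_lt_trans with (pdist y x); auto. unfold Rdiv.
  rewrite <- (Rmult_1_r (pdist y x)) at 2. apply Rmult_le_compat_l; [apply pdist_nonneg|].
  rewrite <- Rinv_1. apply Rinv_le_contravar; lra.
Qed.

Lemma contK_const K c : contK K (fun _ => c).
Proof. intros x _ eps Heps. exists 1; split; [lra|]. intros. rewrite Rminus_diag, Rabs_R0; auto. Qed.

Lemma contK_lin K g h a b : contK K g -> contK K h -> contK K (fun x => a * g x + b * h x).
Proof.
  intros Hg Hh x Hx eps Heps.
  destruct (Hg x Hx (eps / (2 * (Rabs a + 1)))) as [d1 [Hd1 H1]].
  { apply Rdiv_lt_0_compat; [lra|]. pose proof (Rabs_pos a); lra. }
  destruct (Hh x Hx (eps / (2 * (Rabs b + 1)))) as [d2 [Hd2 H2]].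
  { apply Rdiv_lt_0_compat; [lra|]. pose proof (Rabs_pos b); lra. }
  exists (Rmin d1 d2). split; [apply Rmin_pos; auto|]. intros y Hy Hyx.
  assert (A1 := H1 y Hy (Rlt_le_trans _ _ _ Hyx (Rmin_l _ _))).
  assert (A2 := H2 y Hy (Rlt_le_trans _ _ _ Hyx (Rmin_r _ _))).
  replace (a * g y + b * h y - (a * g x + b * h x)) with (a * (g y - g x) + b * (h y - h x)) by ring.
  eapply Rle_lt_trans; [apply Rabs_triang|]. rewrite !Rabs_mult.
  pose proof (Rabs_pos a); pose proof (Rabs_pos b).
  assert (Rabs a * Rabs (g y - g x) <= Rabs a * (eps / (2 * (Rabs a + 1)))) by (apply Rmult_le_compat_l; lra).
  assert (Rabs b * Rabs (h y - h x) <= Rabs b * (eps / (2 * (Rabs b + 1)))) by (apply Rmult_le_compat_l; lra).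
  assert (Rabs a * (eps / (2 * (Rabs a + 1))) < eps / 2).
  { apply (Rmult_lt_reg_r (2 * (Rabs a + 1))); [lra|]. field_simplify; [nra|lra]. }
  assert (Rabs b * (eps / (2 * (Rabs b + 1))) < eps / 2).
  { apply (Rmult_lt_reg_r (2 * (Rabs b + 1))); [lra|]. field_simplify; [nra|lra]. }
  lra.
Qed.

Lemma contK_mult K g h : contK K g -> contK K h -> contK K (fun x => g x * h x).
Proof.
  intros Hg Hh x Hx eps Heps.
  set (A := Rabs (g x) + 1). set (B := Rabs (h x) + 1).
  assert (HA : 0 < A) by (unfold A; pose proof (Rabs_pos (g x)); lra).
  assert (HB : 0 < B) by (unfold B; pose proof (Rabs_pos (h x)); lra).
  destruct (Hg x Hx (Rmin 1 (eps / (2 * B)))) as [d1 [Hd1 H1]].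
  { apply Rmin_pos; [lra|apply Rdiv_lt_0_compat; lra]. }
  destruct (Hh x Hx (Rmin 1 (eps / (2 * A)))) as [d2 [Hd2 H2]].
  { apply Rmin_pos; [lra|apply Rdiv_lt_0_compat; lra]. }
  exists (Rmin d1 d2). split; [apply Rmin_pos; auto|]. intros y Hy Hyx.
  assert (A1 := H1 y Hy (Rlt_le_trans _ _ _ Hyx (Rmin_l _ _))).
  assert (A2 := H2 y Hy (Rlt_le_trans _ _ _ Hyx (Rmin_r _ _))).
  replace (g y * h y - g x * h x) with ((g y - g x) * h y + g x * (h y - h x)) by ring.
  eapply Rle_lt_trans; [apply Rabs_triang|]. rewrite !Rabs_mult.
  assert (Hm1 := Rmin_l 1 (eps / (2 * B))). assert (Hm2 := Rmin_r 1 (eps / (2 * B))).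
  assert (Hm3 := Rmin_l 1 (eps / (2 * A))). assert (Hm4 := Rmin_r 1 (eps / (2 * A))).
  assert (HhB : Rabs (h y) <= B).
  { unfold B; replace (h y) with (h x + (h y - h x)) by ring.
    eapply Rle_trans; [apply Rabs_triang|]. lra. }
  assert (HgA : Rabs (g x) < A) by (unfold A; lra).
  assert (Rabs (g y - g x) * Rabs (h y) <= eps / (2 * B) * B).
  { apply Rmult_le_compat; try apply Rabs_pos; lra. }
  assert (Rabs (g x) * Rabs (h y - h x) <= A * (eps / (2 * A))).
  { apply Rmult_le_compat; try apply Rabs_pos; lra. }
  replace (eps / (2 * B) * B) with (eps / 2) in * by (field; lra).
  replace (A * (eps / (2 * A))) with (eps / 2) in * by (field; lra).
  assert (Rabs (g x) * Rabs (h y - h x) < eps / 2 \/ Rabs (g x) * Rabs (h y - h x) <= eps / 2) by lra.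
  destruct (Req_dec (Rabs (h y - h x)) 0) as [Z|Z].
  - rewrite Z, Rmult_0_r. lra.
  - assert (Rabs (g x) * Rabs (h y - h x) < A * Rabs (h y - h x)).
    { apply Rmult_lt_compat_r; auto. pose proof (Rabs_pos (h y - h x)); lra. }
    assert (A * Rabs (h y - h x) <= A * (eps / (2 * A))) by (apply Rmult_le_compat_l; lra).
    replace (A * (eps / (2 * A))) with (eps / 2) in * by (field; lra). lra.
Qed.

Lemma sum_words_const n c : sumR (fun _ : list nat => c) (words n) = 4 ^ n * c.
Proof.
  induction n; [unfold sumR; simpl; ring|]. rewrite words_cons_sum.
  rewrite (sumR_ext _ (fun _ => 4 ^ n * c)) by (intros; apply IHn). rewrite sumL4. simpl; ring.
Qed.

Lemma I_lin K I (HI : is_ss_integral K I) g h a b : contK K g -> contK K h ->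
  I (fun x => a * g x + b * h x) = a * I g + b * I h.
Proof. destruct HI as [H _]. apply H. Qed.

Lemma I_one K I (HI : is_ss_integral K I) : I (fun _ => 1) = 1.
Proof. destruct HI as [_ [_ [H _]]]. exact H. Qed.

Lemma I_pos K I (HI : is_ss_integral K I) g : contK K g -> (forall x, K x -> 0 <= g x) -> 0 <= I g.
Proof. destruct HI as [_ [H _]]. apply H. Qed.

Lemma I_const K I (HI : is_ss_integral K I) c : I (fun _ => c) = c.
Proof.
  assert (E := I_lin K I HI (fun _ => 1) (fun _ => 1) c 0 (contK_const K 1) (contK_const K 1)).
  rewrite (I_one K I HI) in E. replace (fun _ : pt => c * 1 + 0 * 1) with (fun _ : pt => c) in E.
  - rewrite E; ring.
  - apply functional_extensionality; intros; ring.
Qed.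

Lemma I_bound K I (HI : is_ss_integral K I) h c B : contK K h ->
  (forall x, K x -> Rabs (h x - c) <= B) -> Rabs (I h - c) <= B.
Proof.
  intros Hh HB. apply abs_le_intro.
  assert (P1 := I_pos K I HI (fun x => 1 * h x + (B - c) * 1) (contK_lin K _ _ 1 (B - c) Hh (contK_const K 1))).
  assert (P2 := I_pos K I HI (fun x => (-1) * h x + (B + c) * 1) (contK_lin K _ _ (-1) (B + c) Hh (contK_const K 1))).
  assert (forall x, K x -> - B <= h x - c <= B) by (intros; apply abs_le_elim; auto).
  split.
  - assert (0 <= I (fun x => 1 * h x + (B - c) * 1)) by (apply P1; intros x Hx; specialize (H x Hx); cbv beta; lra).
    rewrite (I_lin K I HI), (I_one K I HI) in H0; auto using contK_const. lra.
  - assert (0 <= I (fun x => (-1) * h x + (B + c) * 1)) by (apply P2; intros x Hx; specialize (H x Hx); cbv beta; lra).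
    rewrite (I_lin K I HI), (I_one K I HI) in H0; auto using contK_const. lra.
Qed.

Lemma I_iter K (HK : is_attractor K) I (HI : is_ss_integral K I) n : forall g, contK K g ->
  I g = (/ 4) ^ n * sumR (fun w => I (fun x => g (fW w x))) (words n).
Proof.
  induction n; intros g Hg.
  - change (words 0) with [@nil nat]. rewrite sumR_cons, sumR_nil. simpl. ring_simplify. reflexivity.
  - rewrite words_cons_sum. destruct HI as [_ [_ [_ Hss]]]. rewrite Hss by auto.
    rewrite (sumR_ext _ (fun i => (/ 4) ^ n * sumR (fun w => I (fun x => g (fW (i :: w) x))) (words n))).
    + rewrite sumR_scal. simpl pow. ring.
    + intros i Hi. apply (IHn (fun x => g (fmap i x))).
      apply (contK_fW K g [i]); auto. intros y Hy. apply (K_fW K HK [i]); auto. apply isw_cons; split; [apply inL4; auto|apply isw_nil].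
Qed.

Definition harm (g : pt -> R) : Prop := forall v a b, isw v -> (a < 4)%nat -> (b < 4)%nat -> a <> b ->
  g (fW v (fmap a (P b))) = (g (fW v (P a)) + g (fW v (P b)) + sumR (fun j => g (fW v (P j))) L4) / 6.
Definition avg (g : pt -> R) : R := / 4 * sumR (fun j => g (P j)) L4.

Lemma harm_comp g w : harm g -> isw w -> harm (fun x => g (fW w x)).
Proof.
  intros H Hw v a b Hv Ha Hb Hab. rewrite <- !fW_app.
  rewrite (sumR_ext _ (fun j => g (fW (w ++ v) (P j)))) by (intros; rewrite fW_app; reflexivity).
  apply H; auto. apply isw_app; auto.
Qed.

Lemma harm0 g a b : harm g -> (a < 4)%nat -> (b < 4)%nat -> a <> b ->
  g (fmap a (P b)) = (g (P a) + g (P b) + sumR (fun j => g (P j)) L4) / 6.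
Proof. intros H Ha Hb Hab. apply (H [] a b isw_nil Ha Hb Hab). Qed.

Lemma mean_value g : harm g -> sumR (fun i => avg (fun x => g (fmap i x))) L4 = 4 * avg g.
Proof.
  intros H. unfold avg. rewrite !sumL4. rewrite !fmap_PP.
  rewrite !(harm0 g 0 1), !(harm0 g 0 2), !(harm0 g 0 3), !(harm0 g 1 0), !(harm0 g 1 2), !(harm0 g 1 3),
    !(harm0 g 2 0), !(harm0 g 2 1), !(harm0 g 2 3), !(harm0 g 3 0), !(harm0 g 3 1), !(harm0 g 3 2) by (auto; lia).
  rewrite !sumL4. field.
Qed.

Lemma avg_iter n : forall g, harm g -> sumR (fun w => avg (fun x => g (fW w x))) (words n) = 4 ^ n * avg g.
Proof.
  induction n; intros g H.
  - change (words 0) with [@nil nat]. rewrite sumR_cons, sumR_nil. rewrite Rplus_0_r. simpl pow. rewrite Rmult_1_l. reflexivity.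
  - rewrite words_cons_sum.
    rewrite (sumR_ext _ (fun i => 4 ^ n * avg (fun x => g (fmap i x)))).
    + rewrite sumR_scal, mean_value by auto. simpl. ring.
    + intros i Hi. apply (IHn (fun x => g (fmap i x))). apply (harm_comp g [i]); auto.
      apply isw_cons; split; [apply inL4; auto|apply isw_nil].
Qed.

Definition oscb (c : nat -> R) (D : R) : Prop := forall j k, (j < 4)%nat -> (k < 4)%nat -> Rabs (c j - c k) <= D.
Definition sub (c : nat -> R) (i j : nat) : R := if Nat.eq_dec j i then c i else (c i + c j + sumR c L4) / 6.

Lemma oscb_nonneg c D : oscb c D -> 0 <= D.
Proof. intros H. specialize (H 0%nat 0%nat ltac:(lia) ltac:(lia)). rewrite Rminus_diag, Rabs_R0 in H; auto. Qed.

Ltac osc_hyps H :=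
  let t a b := (let h := fresh "h" in pose proof (abs_le_elim _ _ (H a b ltac:(lia) ltac:(lia))) as h) in
  t 0%nat 1%nat; t 0%nat 2%nat; t 0%nat 3%nat; t 1%nat 2%nat; t 1%nat 3%nat; t 2%nat 3%nat.

Lemma osc_sub c D i : oscb c D -> (i < 4)%nat -> oscb (sub c i) (2 / 3 * D).
Proof.
  intros H Hi j k Hj Hk. pose proof (oscb_nonneg c D H). osc_hyps H. apply abs_le_intro. unfold sub.
  rewrite sumL4. destruct i as [|[|[|[|]]]]; destruct j as [|[|[|[|]]]]; destruct k as [|[|[|[|]]]]; try lia;
  simpl Nat.eq_dec; cbv iota beta; lra.
Qed.

Lemma sub_close c D i : oscb c D -> (i < 4)%nat -> Rabs (sub c i 0%nat - c 0%nat) <= D.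
Proof.
  intros H Hi. pose proof (oscb_nonneg c D H). osc_hyps H. apply abs_le_intro. unfold sub.
  rewrite sumL4. destruct i as [|[|[|[|]]]]; try lia; simpl Nat.eq_dec; cbv iota beta; lra.
Qed.

Lemma corners_app g v i j : harm g -> isw v -> (i < 4)%nat -> (j < 4)%nat ->
  g (fW (v ++ [i]) (P j)) = sub (fun j => g (fW v (P j))) i j.
Proof.
  intros H Hv Hi Hj. rewrite fW_app. change (fW [i] (P j)) with (fmap i (P j)). unfold sub.
  destruct Nat.eq_dec as [->|Hji]; [rewrite fmap_PP; reflexivity|]. apply H; auto.
Qed.

Lemma osc_cells g D : harm g -> oscb (fun j => g (P j)) D ->
  forall v, isw v -> oscb (fun j => g (fW v (P j))) ((2 / 3) ^ length v * D).
Proof.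
  intros H HD v. induction v as [|i v IH] using rev_ind; intros Hv.
  - simpl. rewrite Rmult_1_l. exact HD.
  - apply isw_app in Hv as [Hv Hi]. apply isw_cons in Hi as [Hi _].
    rewrite length_app. simpl length. rewrite Nat.add_1_r. simpl pow.
    intros j k Hj Hk. rewrite !corners_app by auto.
    replace (2 / 3 * (2 / 3) ^ length v * D) with (2 / 3 * ((2 / 3) ^ length v * D)) by ring.
    apply osc_sub; auto.
Qed.

Lemma chain g D : harm g -> oscb (fun j => g (P j)) D -> forall v u, isw v -> isw u ->
  Rabs (g (fW v (fW u (P 0))) - g (fW v (P 0))) <= 3 * ((2 / 3) ^ length v * D) * (1 - (2 / 3) ^ length u).
Proof.
  intros H HD v u Hv. induction u as [|i u IH] using rev_ind; intros Hu.
  - simpl. rewrite Rminus_diag, Rabs_R0. lra.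
  - apply isw_app in Hu as [Hu Hi]. apply isw_cons in Hi as [Hi _].
    assert (Hvu : isw (v ++ u)) by (apply isw_app; auto).
    assert (E : g (fW v (fW (u ++ [i]) (P 0))) = sub (fun j => g (fW (v ++ u) (P j))) i 0%nat).
    { rewrite <- corners_app by (auto; lia). rewrite !fW_app. reflexivity. }
    assert (E2 : g (fW v (fW u (P 0))) = g (fW (v ++ u) (P 0))) by (rewrite fW_app; reflexivity).
    assert (Hosc := osc_cells g D H HD (v ++ u) Hvu).
    assert (Hc := sub_close _ _ i Hosc Hi). rewrite <- E, <- E2 in Hc.
    specialize (IH Hu).
    rewrite length_app in *. simpl length. rewrite Nat.add_1_r. rewrite pow_add in Hc.
    replace (g (fW v (fW (u ++ [i]) (P 0))) - g (fW v (P 0))) with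
      ((g (fW v (fW (u ++ [i]) (P 0))) - g (fW v (fW u (P 0)))) + (g (fW v (fW u (P 0))) - g (fW v (P 0)))) by ring.
    eapply Rle_trans; [apply Rabs_triang|]. simpl pow. nra.
Qed.

Lemma K_bound K (HK : is_attractor K) : exists M, 0 < M /\ forall x, K x -> pnorm x <= M.
Proof.
  destruct HK as [_ [[M HM] _]]. exists (Rabs M + 1). split; [pose proof (Rabs_pos M); lra|].
  intros x Hx. specialize (HM x Hx). pose proof (Rle_abs M). lra.
Qed.

Lemma pointwise K (HK : is_attractor K) g D : contK K g -> harm g -> oscb (fun j => g (P j)) D ->
  forall v x, isw v -> K x -> Rabs (g (fW v x) - g (fW v (P 0))) <= 3 * ((2 / 3) ^ length v * D).
Proof.
  intros Hg H HD v x Hv Hx. apply le_epsilon. intros eps Heps.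
  assert (Kv : K (fW v x)) by (apply K_fW; auto).
  destruct (Hg _ Kv eps Heps) as [d [Hd Hc]].
  destruct (K_bound K HK) as [M [HM HMb]].
  destruct (cv_pow_half M d Hd) as [N HN]. specialize (HN N (le_n N)).
  unfold R_dist in HN. rewrite Rminus_0_r, Rabs_right in HN by (apply Rle_ge, div_nonneg; [lra|apply pow_lt; lra]).
  destruct (K_address K HK x Hx N) as [u [y [Hu [Hy ->]]]].
  assert (Hisu : isw u) by (eapply words_isw; eauto).
  assert (Hlu : length u = N) by (eapply words_len; eauto).
  assert (Kp : K (fW v (fW u (P 0)))) by (apply K_fW; auto; apply K_fW; auto; apply K_P; auto; lia).
  assert (Hdist : pdist (fW v (fW u (P 0))) (fW v (fW u y)) < d).
  { rewrite <- !fW_app, pdist_fW, pdist_sym, pdist_0, length_app, pow_add, Hlu.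
    assert (1 <= 2 ^ length v) by (apply pow_R1_Rle; lra). assert (0 < 2 ^ N) by (apply pow_lt; lra).
    assert (pnorm y <= M) by auto. pose proof (pdist_nonneg y (P 0)).
    assert (0 <= pnorm y) by (rewrite <- pdist_0; apply pdist_nonneg).
    assert (pnorm y / (2 ^ length v * 2 ^ N) <= pnorm y / 2 ^ N).
    { unfold Rdiv. apply Rmult_le_compat_l; auto. apply Rinv_le_contravar; [lra|nra]. }
    assert (pnorm y / 2 ^ N <= M / 2 ^ N).
    { unfold Rdiv. apply Rmult_le_compat_r; auto. left; apply Rinv_0_lt_compat; lra. }
    lra. }
  specialize (Hc _ Kp Hdist).
  assert (Hch := chain g D H HD v u Hv Hisu).
  assert (0 <= D) by (eapply oscb_nonneg; eauto).
  assert (0 <= (2/3) ^ length u) by (apply pow_le; lra).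
  assert (0 <= (2/3) ^ length v) by (apply pow_le; lra).
  replace (g (fW v (fW u y)) - g (fW v (P 0))) with
    (-(g (fW v (fW u (P 0))) - g (fW v (fW u y))) + (g (fW v (fW u (P 0))) - g (fW v (P 0)))) by ring.
  assert (0 <= (2/3) ^ length v * D * (2/3) ^ length u) by (apply Rmult_le_pos; [apply Rmult_le_pos|]; auto).
  eapply Rle_trans; [apply Rabs_triang|]. rewrite Rabs_Ropp. lra.
Qed.

Lemma zero_geom z C r : 0 <= r < 1 -> (forall n, Rabs z <= C * r ^ n) -> z = 0.
Proof.
  intros Hr H. apply NNPP; intros Hz. assert (Hpos : 0 < Rabs z) by (apply Rabs_pos_lt; auto).
  destruct (pow_lt_1_zero r ltac:(rewrite Rabs_right; lra) (Rabs z / (Rabs C + 1))) as [N HN].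
  { apply Rdiv_lt_0_compat; [auto|pose proof (Rabs_pos C); lra]. }
  specialize (HN N (le_n N)). specialize (H N).
  assert (0 <= r ^ N) by (apply pow_le; lra). rewrite Rabs_right in HN by lra.
  assert (C * r ^ N <= Rabs C * r ^ N) by (apply Rmult_le_compat_r; [lra|apply Rle_abs]).
  assert (Rabs C * r ^ N <= Rabs C * (Rabs z / (Rabs C + 1))) by (apply Rmult_le_compat_l; [apply Rabs_pos|lra]).
  assert (Rabs C * (Rabs z / (Rabs C + 1)) < Rabs z).
  { apply (Rmult_lt_reg_r (Rabs C + 1)); [pose proof (Rabs_pos C); lra|].
    field_simplify; [|pose proof (Rabs_pos C); lra]. pose proof (Rabs_pos C). nra. }
  lra.
Qed.

Lemma cell_bound K (HK : is_attractor K) I (HI : is_ss_integral K I) g D :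
  contK K g -> harm g -> oscb (fun j => g (P j)) D -> forall v, isw v ->
  Rabs (I (fun x => g (fW v x)) - avg (fun x => g (fW v x))) <= 4 * ((2 / 3) ^ length v * D).
Proof.
  intros Hg H HD v Hv. apply (I_bound K I HI).
  - apply contK_fW; auto. intros; apply K_fW; auto.
  - intros x Hx. assert (Hp := pointwise K HK g D Hg H HD v x Hv Hx).
    assert (Ho := osc_cells g D H HD v Hv).
    pose proof (abs_le_elim _ _ (Ho 0%nat 1%nat ltac:(lia) ltac:(lia))).
    pose proof (abs_le_elim _ _ (Ho 0%nat 2%nat ltac:(lia) ltac:(lia))).
    pose proof (abs_le_elim _ _ (Ho 0%nat 3%nat ltac:(lia) ltac:(lia))).
    apply abs_le_elim in Hp. apply abs_le_intro. unfold avg. rewrite sumL4. cbv beta in *. lra.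
Qed.

Theorem INT K (HK : is_attractor K) I (HI : is_ss_integral K I) g :
  contK K g -> harm g -> I g = avg g.
Proof.
  intros Hg H.
  set (D := sumR (fun j => sumR (fun k => Rabs (g (P j) - g (P k))) L4) L4).
  assert (HD : oscb (fun j => g (P j)) D).
  { intros j k Hj Hk. unfold D.
    eapply Rle_trans; [|apply sumR_ge_term with (a := j); [|apply inL4; auto]].
    - apply sumR_ge_term with (F := fun k => Rabs (g (P j) - g (P k))); [intros; apply Rabs_pos|apply inL4; auto].
    - intros; apply sumR_nonneg; intros; apply Rabs_pos. }
  apply Rminus_diag_uniq. apply (zero_geom _ (4 * D) (2 / 3)); [lra|]. intros n.
  rewrite (I_iter K HK I HI n g Hg).
  assert (Ea : avg g = (/ 4) ^ n * sumR (fun w => avg (fun x => g (fW w x))) (words n)).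
  { rewrite avg_iter by auto. rewrite <- Rmult_assoc, <- Rpow_mult_distr, Rinv_l, pow1 by lra. ring. }
  rewrite Ea, <- Rmult_minus_distr_l, <- sumR_minus, Rabs_mult.
  rewrite Rabs_right by (apply Rle_ge, pow_le; lra).
  eapply Rle_trans.
  { apply Rmult_le_compat_l; [apply pow_le; lra|]. eapply Rle_trans; [apply sumR_abs|].
    apply sumR_le with (G := fun _ => 4 * ((2 / 3) ^ n * D)).
    intros w Hw. rewrite <- (words_len n w Hw). apply (cell_bound K HK I HI); auto. eapply words_isw; eauto. }
  rewrite sum_words_const. rewrite <- Rmult_assoc, <- Rpow_mult_distr, Rinv_l, pow1 by lra. lra.
Qed.

Lemma quad_zero A B : (forall t, 0 <= 2 * t * A + t ^ 2 * B) -> A = 0.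
Proof.
  intros H. set (s := Rabs B + 1). assert (Hs : 0 < s) by (unfold s; pose proof (Rabs_pos B); lra).
  specialize (H (- A / s)).
  assert (HB : (- A / s) ^ 2 * B <= (- A / s) ^ 2 * Rabs B) by (apply Rmult_le_compat_l; [apply pow2_ge_0|apply Rle_abs]).
  replace ((- A / s) ^ 2 * Rabs B) with (A ^ 2 / s * (Rabs B / s)) in HB by (field; lra).
  assert (Hq : Rabs B / s <= 1) by (apply (Rmult_le_reg_r s); [lra|]; unfold Rdiv; rewrite Rmult_assoc, Rinv_l by lra; unfold s; lra).
  assert (0 <= A ^ 2 / s) by (apply div_nonneg; [apply pow2_ge_0|auto]).
  assert (A ^ 2 / s * (Rabs B / s) <= A ^ 2 / s) by (rewrite <- (Rmult_1_r (A ^ 2 / s)) at 2; apply Rmult_le_compat_l; auto).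
  replace (2 * (- A / s) * A) with (- 2 * (A ^ 2 / s)) in H by (field; lra).
  assert (A ^ 2 / s <= 0) by lra.
  assert (A ^ 2 = 0).
  { apply Rle_antisym; [|apply pow2_ge_0]. apply (Rmult_le_reg_r (/ s)); [apply Rinv_0_lt_compat; lra|]. lra. }
  nra.
Qed.

Lemma e4_expand (p q : nat -> R) t :
  e4 (fun j => p j + t * q j) (fun j => p j + t * q j) = e4 p p + 2 * t * e4 p q + t ^ 2 * e4 q q.
Proof. unfold e4. ring. Qed.

Lemma e4_lin (p q : nat -> R) : e4 p q = sumR (fun j => q j * sumR (fun k => p j - p k) L4) L4.
Proof. unfold e4. rewrite !sumL4. ring. Qed.

Lemma ind_sym x y : ind x y = ind y x.
Proof. unfold ind. destruct (pt_eq_dec x y), (pt_eq_dec y x); congruence. Qed.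

Lemma solve6 c0 c1 c2 c3 m01 m02 m03 m12 m13 m23 :
  8 * m01 - (c0 + m01 + m02 + m03) - (c1 + m01 + m12 + m13) = 0 ->
  8 * m02 - (c0 + m01 + m02 + m03) - (c2 + m02 + m12 + m23) = 0 ->
  8 * m03 - (c0 + m01 + m02 + m03) - (c3 + m03 + m13 + m23) = 0 ->
  8 * m12 - (c1 + m01 + m12 + m13) - (c2 + m02 + m12 + m23) = 0 ->
  8 * m13 - (c1 + m01 + m12 + m13) - (c3 + m03 + m13 + m23) = 0 ->
  8 * m23 - (c2 + m02 + m12 + m23) - (c3 + m03 + m13 + m23) = 0 ->
  m01 = (c0 + c1 + (c0 + c1 + c2 + c3)) / 6 /\ m02 = (c0 + c2 + (c0 + c1 + c2 + c3)) / 6 /\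
  m03 = (c0 + c3 + (c0 + c1 + c2 + c3)) / 6 /\ m12 = (c1 + c2 + (c0 + c1 + c2 + c3)) / 6 /\
  m13 = (c1 + c3 + (c0 + c1 + c2 + c3)) / 6 /\ m23 = (c2 + c3 + (c0 + c1 + c2 + c3)) / 6.
Proof. intros. repeat split; lra. Qed.


(* the first-order condition at a midpoint *)
Lemma psi_fo K m X psi : is_psi K m X psi -> forall k u a b, (m <= k)%nat -> In u (words k) ->
  (a < 4)%nat -> (b < 4)%nat -> a <> b ->
  sumR (fun k' => psi (fW u (fmap a (P b))) - psi (fW u (fmap a (P k')))) L4 +
  sumR (fun k' => psi (fW u (fmap b (P a))) - psi (fW u (fmap b (P k')))) L4 = 0.
Proof.
  intros [_ [_ Hmin]] k u a b Hk Hu Ha Hb Hab.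
  set (Y := fW u (fmap a (P b))).
  assert (HYk : ~ In Y (Vm k)) by (unfold Y; rewrite <- (words_len k u Hu); apply mid_not_Vm; auto).
  assert (Hua : In (u ++ [a]) (words (S k))).
  { apply words_spec. apply words_spec in Hu as [Hl Hi]. split; [rewrite length_app; simpl; lia|].
    apply isw_app; split; auto. apply isw_cons; split; auto using isw_nil. }
  assert (Hub : In (u ++ [b]) (words (S k))).
  { apply words_spec. apply words_spec in Hu as [Hl Hi]. split; [rewrite length_app; simpl; lia|].
    apply isw_app; split; auto. apply isw_cons; split; auto using isw_nil. }
  assert (EYa : Y = fW (u ++ [a]) (P b)) by (unfold Y; rewrite fW_app; reflexivity).
  assert (EYb : Y = fW (u ++ [b]) (P a)) by (unfold Y; rewrite fW_app, fmap_sym; reflexivity).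
  assert (HY2 : cnt (S k) Y = 2).
  { apply cnt_two. rewrite EYa. apply fW_in_Vm; auto.
    intros H0. apply HYk. apply (Vm_mono_le 0 k); auto; lia. }
  assert (Hne : (u ++ [a], b) <> (u ++ [b], a)) by (intros E; injection E; auto).
  set (A := sumR (fun v => e4 (fun j => psi (fW v (P j))) (fun j => ind (fW v (P j)) Y)) (words (S k))).
  set (B := sumR (fun v => e4 (fun j => ind (fW v (P j)) Y) (fun j => ind (fW v (P j)) Y)) (words (S k))).
  assert (HA : A = 0).
  { apply (quad_zero A B). intros t.
    set (w := fun Z => psi Z + t * ind Z Y).
    assert (Hw : forall Z, In Z (Vm k) -> w Z = psi Z).
    { intros Z HZ. unfold w. rewrite ind_neq; [ring|]. intros ->. contradiction. }
    specialize (Hmin k Hk w Hw). rewrite !Eraw_cells in Hmin.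
    unfold w in Hmin.
    assert (E : sumR (fun v => e4 (fun j => psi (fW v (P j)) + t * ind (fW v (P j)) Y)
                                  (fun j => psi (fW v (P j)) + t * ind (fW v (P j)) Y)) (words (S k)) =
      sumR (fun v => e4 (fun j => psi (fW v (P j))) (fun j => psi (fW v (P j))) +
      2 * t * e4 (fun j => psi (fW v (P j))) (fun j => ind (fW v (P j)) Y) +
      t ^ 2 * e4 (fun j => ind (fW v (P j)) Y) (fun j => ind (fW v (P j)) Y)) (words (S k)))
      by (apply sumR_ext; intros; apply e4_expand).
    rewrite E in Hmin.
    rewrite !sumR_plus, !sumR_scal in Hmin. fold A B in Hmin. lra. }
  unfold A in HA.
  rewrite (sumR_ext _ (fun v => sumR (fun j => ind (fW v (P j)) Y * sumR (fun k' => psi (fW v (P j)) - psi (fW v (P k'))) L4) L4)) in HA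
    by (intros; apply e4_lin).
  rewrite (sum_reps2 (S k) Y (u ++ [a]) b (u ++ [b]) a (fun v j => sumR (fun k' => psi (fW v (P j)) - psi (fW v (P k'))) L4))
    in HA; auto.
  rewrite <- HA. f_equal; apply sumR_ext; intros k' _; rewrite !fW_app; cbn [fW fold_right]; reflexivity.
Qed.

Ltac norm_mid H :=
  rewrite ?fmap_PP, ?(fmap_sym 1 0), ?(fmap_sym 2 0), ?(fmap_sym 3 0), ?(fmap_sym 2 1),
    ?(fmap_sym 3 1), ?(fmap_sym 3 2) in H.

Lemma psi_harm K m X psi : is_psi K m X psi -> forall k u a b, (m <= k)%nat -> In u (words k) ->
  (a < 4)%nat -> (b < 4)%nat -> a <> b ->
  psi (fW u (fmap a (P b))) = (psi (fW u (P a)) + psi (fW u (P b)) + sumR (fun j => psi (fW u (P j))) L4) / 6.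
Proof.
  intros Hpsi k u a b Hk Hu Ha Hb Hab.
  assert (E01 := psi_fo K m X psi Hpsi k u 0 1 Hk Hu ltac:(lia) ltac:(lia) ltac:(lia)).
  assert (E02 := psi_fo K m X psi Hpsi k u 0 2 Hk Hu ltac:(lia) ltac:(lia) ltac:(lia)).
  assert (E03 := psi_fo K m X psi Hpsi k u 0 3 Hk Hu ltac:(lia) ltac:(lia) ltac:(lia)).
  assert (E12 := psi_fo K m X psi Hpsi k u 1 2 Hk Hu ltac:(lia) ltac:(lia) ltac:(lia)).
  assert (E13 := psi_fo K m X psi Hpsi k u 1 3 Hk Hu ltac:(lia) ltac:(lia) ltac:(lia)).
  assert (E23 := psi_fo K m X psi Hpsi k u 2 3 Hk Hu ltac:(lia) ltac:(lia) ltac:(lia)).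
  rewrite !sumL4 in E01, E02, E03, E12, E13, E23.
  norm_mid E01. norm_mid E02. norm_mid E03. norm_mid E12. norm_mid E13. norm_mid E23.
  rewrite sumL4.
  destruct a as [|[|[|[|]]]]; destruct b as [|[|[|[|]]]]; try lia; norm_mid Hab;
  rewrite ?fmap_PP, ?(fmap_sym 1 0), ?(fmap_sym 2 0), ?(fmap_sym 3 0), ?(fmap_sym 2 1),
    ?(fmap_sym 3 1), ?(fmap_sym 3 2); lra.
Qed.

Lemma ind_is_if X Y : (if pt_eq_dec X Y then 1 else 0) = ind Y X.
Proof. rewrite ind_sym. reflexivity. Qed.

Theorem part1 K (HK : is_attractor K) I (HI : is_ss_integral K I) m X psi :
  (1 <= m)%nat -> In X (Vm m) -> ~ In X (Vm 0) -> is_psi K m X psi -> I psi = 2 / 4 ^ (m + 1).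
Proof.
  intros Hm HX HX0 Hpsi. pose proof Hpsi as [Hc [Hv _]].
  rewrite (I_iter K HK I HI m psi Hc).
  rewrite (sumR_ext _ (fun w => / 4 * sumR (fun j => ind (fW w (P j)) X) L4)).
  - rewrite sumR_scal. fold (cnt m X). rewrite cnt_two by auto.
    rewrite pow_inv, pow_add. field. apply pow_nonzero; lra.
  - intros w Hw. rewrite (INT K HK I HI).
    + unfold avg. f_equal. apply sumR_ext; intros j Hj. rewrite Hv by (apply fW_in_Vm; auto; apply inL4; auto).
      apply ind_is_if.
    + apply contK_fW; auto. intros; apply K_fW; auto. eapply words_isw; eauto.
    + intros v a b Hisv Ha Hb Hab. cbv beta. rewrite <- !fW_app.
      rewrite (sumR_ext _ (fun j => psi (fW (w ++ v) (P j)))) by (intros; rewrite fW_app; reflexivity).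
      apply (psi_harm K m X psi Hpsi (m + length v)); auto; [lia|].
      apply words_spec. split; [rewrite length_app, (words_len m w Hw); lia|].
      apply isw_app; split; auto. eapply words_isw; eauto.
Qed.

Lemma aff_lower (phi : pt -> R) : (forall i y, (i < 4)%nat -> phi (fmap i y) >= phi y / 2) ->
  forall u y, isw u -> phi (fW u y) >= phi y / 2 ^ length u.
Proof.
  intros H u y. induction u as [|i u IH]; intros Hu.
  - simpl. lra.
  - apply isw_cons in Hu as [Hi Hu]. rewrite fW_cons. specialize (H i (fW u y) Hi). specialize (IH Hu).
    simpl length. simpl pow. assert (0 < 2 ^ length u) by (apply pow_lt; lra).
    replace (phi y / (2 * 2 ^ length u)) with ((phi y / 2 ^ length u) / 2) by (field; lra). lra.
Qed.

Lemma aff_nonneg K (HK : is_attractor K) (phi : pt -> R) C :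
  (forall i y, (i < 4)%nat -> phi (fmap i y) >= phi y / 2) -> (forall y, K y -> Rabs (phi y) <= C) ->
  forall x, K x -> 0 <= phi x.
Proof.
  intros H HC x Hx. apply Rnot_lt_le. intros Hneg.
  destruct (cv_pow_half C (- phi x)) as [N HN]; [lra|]. specialize (HN N (le_n N)).
  destruct (K_address K HK x Hx N) as [u [y [Hu [Hy ->]]]].
  assert (Hl := aff_lower phi H u y (words_isw N u Hu)). rewrite (words_len N u Hu) in Hl.
  specialize (HC y Hy). apply abs_le_elim in HC. unfold R_dist in HN. rewrite Rminus_0_r in HN.
  assert (0 < 2 ^ N) by (apply pow_lt; lra).
  assert (phi y / 2 ^ N >= - C / 2 ^ N) by (unfold Rdiv; apply Rle_ge, Rmult_le_compat_r; [left; apply Rinv_0_lt_compat|]; lra).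
  pose proof (Rle_abs (C / 2 ^ N)).
  replace (- C / 2 ^ N) with (- (C / 2 ^ N)) in * by (field; lra). lra.
Qed.

Lemma K_T K (HK : is_attractor K) x : K x -> Tset x.
Proof.
  intros Hx. destruct (K_bound K HK) as [M [HM HMb]].
  assert (Bc1 : forall y, K y -> Rabs (c1 y) <= M) by (intros y Hy; eapply Rle_trans; [apply norm_c1|auto]).
  assert (Bc2 : forall y, K y -> Rabs (c2 y) <= M) by (intros y Hy; eapply Rle_trans; [apply norm_c2|auto]).
  assert (Bc3 : forall y, K y -> Rabs (c3 y) <= M) by (intros y Hy; eapply Rle_trans; [apply norm_c3|auto]).
  pose proof a_pos.
  assert (HPi : forall i, 0 <= c1 (P i) /\ 0 <= c2 (P i) /\ c1 (P i) + c2 (P i) <= c3 (P i) /\ c3 (P i) <= a6)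
    by (intros i; apply T_P).
  unfold Tset. split; [|split; [|split]].
  - apply (aff_nonneg K HK c1 M); auto. intros i y _. rewrite c1_fmap. specialize (HPi i). lra.
  - apply (aff_nonneg K HK c2 M); auto. intros i y _. rewrite c2_fmap. specialize (HPi i). lra.
  - assert (0 <= c3 x - c1 x - c2 x); [|lra].
    apply (aff_nonneg K HK (fun y => c3 y - c1 y - c2 y) (3 * M)); auto.
    + intros i y _. rewrite c1_fmap, c2_fmap, c3_fmap. specialize (HPi i). lra.
    + intros y Hy. specialize (Bc1 y Hy); specialize (Bc2 y Hy); specialize (Bc3 y Hy).
      apply abs_le_elim in Bc1; apply abs_le_elim in Bc2; apply abs_le_elim in Bc3. apply abs_le_intro. lra.
  - assert (0 <= a6 - c3 x); [|lra].
    apply (aff_nonneg K HK (fun y => a6 - c3 y) (a6 + M)); auto.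
    + intros i y _. rewrite c3_fmap. specialize (HPi i). lra.
    + intros y Hy. specialize (Bc3 y Hy). apply abs_le_elim in Bc3. apply abs_le_intro. lra.
Qed.

Lemma LAT_fW0 w : exists z1 z2 z3 : Z,
  c1 (fW w (P 0)) = a6 * IZR z1 / 2 ^ length w /\ c2 (fW w (P 0)) = a6 * IZR z2 / 2 ^ length w /\
  c3 (fW w (P 0)) = a6 * IZR z3 / 2 ^ length w.
Proof. apply LAT_fW. Qed.

Lemma cell_eq_int v1 v2 j1 j2 z1 z2 z3 y1 y2 y3 : length v1 = length v2 ->
  c1 (fW v1 (P 0)) = a6 * IZR z1 / 2 ^ length v1 -> c2 (fW v1 (P 0)) = a6 * IZR z2 / 2 ^ length v1 ->
  c3 (fW v1 (P 0)) = a6 * IZR z3 / 2 ^ length v1 ->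
  c1 (fW v2 (P 0)) = a6 * IZR y1 / 2 ^ length v2 -> c2 (fW v2 (P 0)) = a6 * IZR y2 / 2 ^ length v2 ->
  c3 (fW v2 (P 0)) = a6 * IZR y3 / 2 ^ length v2 ->
  (pz1 j1 + z1 = pz1 j2 + y1)%Z -> (pz2 j1 + z2 = pz2 j2 + y2)%Z -> (pz3 j1 + z3 = pz3 j2 + y3)%Z ->
  fW v1 (P j1) = fW v2 (P j2).
Proof.
  intros Hl H1 H2 H3 G1 G2 G3 E1 E2 E3. rewrite <- Hl in G1, G2, G3.
  apply (f_equal IZR) in E1, E2, E3. rewrite !plus_IZR in E1, E2, E3.
  apply pt_ext.
  - rewrite c1_fW, (c1_fW v2), c1_Pz, c1_Pz, <- Hl, H1, G1.
    replace (IZR y1) with (IZR (pz1 j1) + IZR z1 - IZR (pz1 j2)) by lra. field. apply pow_nonzero; lra.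
  - rewrite c2_fW, (c2_fW v2), c2_Pz, c2_Pz, <- Hl, H2, G2.
    replace (IZR y2) with (IZR (pz2 j1) + IZR z2 - IZR (pz2 j2)) by lra. field. apply pow_nonzero; lra.
  - rewrite c3_fW, (c3_fW v2), c3_Pz, c3_Pz, <- Hl, H3, G3.
    replace (IZR y3) with (IZR (pz3 j1) + IZR z3 - IZR (pz3 j2)) by lra. field. apply pow_nonzero; lra.
Qed.

Ltac try_pair v1 v2 j1 j2 :=
  exists j1, j2; split; [lia|split; [lia|]];
  eapply cell_eq_int; [|eassumption..|]; [auto|cbn [pz1 pz2 pz3]; lia..].

Lemma SEP n v1 v2 y1 y2 : length v1 = n -> length v2 = n -> Tset y1 -> Tset y2 ->
  Rabs (c1 (fW v1 y1) - c1 (fW v2 y2)) < a6 / (6 * 2 ^ n) ->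
  Rabs (c2 (fW v1 y1) - c2 (fW v2 y2)) < a6 / (6 * 2 ^ n) ->
  Rabs (c3 (fW v1 y1) - c3 (fW v2 y2)) < a6 / (6 * 2 ^ n) ->
  exists j1 j2, (j1 < 4)%nat /\ (j2 < 4)%nat /\ fW v1 (P j1) = fW v2 (P j2).
Proof.
  intros L1 L2 T1 T2 D1 D2 D3.
  destruct (LAT_fW0 v1) as [z1 [z2 [z3 [H1 [H2 H3]]]]].
  destruct (LAT_fW0 v2) as [w1 [w2 [w3 [G1 [G2 G3]]]]].
  pose proof a_pos as HA. set (N := 2 ^ n). assert (HN : 0 < N) by (apply pow_lt; lra).
  rewrite (c1_fW v1 y1), (c1_fW v2 y2) in D1. rewrite (c2_fW v1 y1), (c2_fW v2 y2) in D2.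
  rewrite (c3_fW v1 y1), (c3_fW v2 y2) in D3.
  rewrite L1 in H1, H2, H3, D1, D2, D3. rewrite L2 in G1, G2, G3, D1, D2, D3.
  fold N in H1, H2, H3, G1, G2, G3, D1, D2, D3.
  rewrite H1, G1 in D1. rewrite H2, G2 in D2. rewrite H3, G3 in D3.
  set (d1 := (c1 y1 / N + a6 * IZR z1 / N - (c1 y2 / N + a6 * IZR w1 / N)) * N) in *.
  set (d2 := (c2 y1 / N + a6 * IZR z2 / N - (c2 y2 / N + a6 * IZR w2 / N)) * N) in *.
  set (d3 := (c3 y1 / N + a6 * IZR z3 / N - (c3 y2 / N + a6 * IZR w3 / N)) * N) in *.
  assert (F1 : a6 * IZR (w1 - z1) = c1 y1 - c1 y2 - d1) by (unfold d1; rewrite minus_IZR; field; lra).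
  assert (F2 : a6 * IZR (w2 - z2) = c2 y1 - c2 y2 - d2) by (unfold d2; rewrite minus_IZR; field; lra).
  assert (F3 : a6 * IZR (w3 - z3) = c3 y1 - c3 y2 - d3) by (unfold d3; rewrite minus_IZR; field; lra).
  assert (B : forall d, Rabs (d / N) < a6 / (6 * N) -> - a6 / 6 < d < a6 / 6).
  { intros d Hd. apply Rabs_def2 in Hd as [Hd1 Hd2].
    split; [apply (Rmult_lt_reg_r (/ N)); [apply Rinv_0_lt_compat; lra|]|apply (Rmult_lt_reg_r (/ N)); [apply Rinv_0_lt_compat; lra|]];
    [replace (- a6 / 6 * / N) with (- (a6 / (6 * N))) by (field; lra)|replace (a6 / 6 * / N) with (a6 / (6 * N)) by (field; lra)];
    unfold Rdiv in *; lra. }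
  assert (B1 : - a6 / 6 < d1 < a6 / 6) by (apply B; unfold d1; replace (_ * N / N) with (c1 y1 / N + a6 * IZR z1 / N - (c1 y2 / N + a6 * IZR w1 / N)) by (field; lra); auto).
  assert (B2 : - a6 / 6 < d2 < a6 / 6) by (apply B; unfold d2; replace (_ * N / N) with (c2 y1 / N + a6 * IZR z2 / N - (c2 y2 / N + a6 * IZR w2 / N)) by (field; lra); auto).
  assert (B3 : - a6 / 6 < d3 < a6 / 6) by (apply B; unfold d3; replace (_ * N / N) with (c3 y1 / N + a6 * IZR z3 / N - (c3 y2 / N + a6 * IZR w3 / N)) by (field; lra); auto).
  clearbody d1 d2 d3. unfold Tset in T1, T2.
  set (e1 := (w1 - z1)%Z) in *. set (e2 := (w2 - z2)%Z) in *. set (e3 := (w3 - z3)%Z) in *.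
  assert (R : forall q : Z, (a6 * IZR q < 3 * a6 / 2) -> (q <= 1)%Z).
  { intros q Hq. apply Z.nlt_ge. intros Hc. assert (IZR q >= 2) by (apply Rle_ge, IZR_le; lia). nra. }
  assert (R' : forall q : Z, (- 3 * a6 / 2 < a6 * IZR q) -> (-1 <= q)%Z).
  { intros q Hq. apply Z.nlt_ge. intros Hc. assert (IZR q <= -2) by (apply IZR_le; lia). nra. }
  assert (I1 : (-1 <= e1 <= 1)%Z) by (split; [apply R'|apply R]; lra).
  assert (I2 : (-1 <= e2 <= 1)%Z) by (split; [apply R'|apply R]; lra).
  assert (I3 : (-1 <= e3 <= 1)%Z) by (split; [apply R'|apply R]; lra).
  assert (I4 : (-1 <= e3 - e1 - e2 <= 1)%Z) by (split; [apply R'|apply R]; rewrite !minus_IZR, !Rmult_minus_distr_l; lra).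
  assert (I5 : (-1 <= e1 + e2 <= 1)%Z) by (split; [apply R'|apply R]; rewrite !plus_IZR, !Rmult_plus_distr_l; lra).
  assert (I6 : (-1 <= e3 - e2 <= 1)%Z) by (split; [apply R'|apply R]; rewrite !minus_IZR, !Rmult_minus_distr_l; lra).
  assert (I7 : (-1 <= e3 - e1 <= 1)%Z) by (split; [apply R'|apply R]; rewrite !minus_IZR, !Rmult_minus_distr_l; lra).
  clear R R' F1 F2 F3 B B1 B2 B3 D1 D2 D3.
  assert (C1 : (e1 = -1 \/ e1 = 0 \/ e1 = 1)%Z) by lia.
  assert (C2 : (e2 = -1 \/ e2 = 0 \/ e2 = 1)%Z) by lia.
  assert (C3 : (e3 = -1 \/ e3 = 0 \/ e3 = 1)%Z) by lia.
  unfold e1, e2, e3 in *. clear e1 e2 e3.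
  unfold N in H1, H2, H3, G1, G2, G3. rewrite <- L1 in H1, H2, H3. rewrite <- L2 in G1, G2, G3.
  assert (Hl : length v1 = length v2) by lia.
  destruct C1 as [C1|[C1|C1]]; destruct C2 as [C2|[C2|C2]]; destruct C3 as [C3|[C3|C3]]; try lia;
  let tp j1 j2 := (exists j1, j2; split; [lia|split; [lia|]];
     apply (cell_eq_int v1 v2 j1 j2 z1 z2 z3 w1 w2 w3 Hl H1 H2 H3 G1 G2 G3); cbn [pz1 pz2 pz3]; lia) in
  first [ tp 0%nat 0%nat | tp 0%nat 1%nat | tp 0%nat 2%nat | tp 0%nat 3%nat | tp 1%nat 0%nat | tp 1%nat 1%nat | tp 1%nat 2%nat | tp 1%nat 3%nat | tp 2%nat 0%nat | tp 2%nat 1%nat | tp 2%nat 2%nat | tp 2%nat 3%nat | tp 3%nat 0%nat | tp 3%nat 1%nat | tp 3%nat 2%nat | tp 3%nat 3%nat ].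
Qed.

Definition ext (c : nat -> R) (s : list nat) : nat -> R := fold_left sub s c.

Lemma ext_cons c i s : ext c (i :: s) = ext (sub c i) s.
Proof. reflexivity. Qed.
Lemma ext_app c s t : ext c (s ++ t) = ext (ext c s) t.
Proof. unfold ext. apply fold_left_app. Qed.
Lemma ext_snoc c s i : ext c (s ++ [i]) = sub (ext c s) i.
Proof. rewrite ext_app. reflexivity. Qed.

Lemma sub_diag c j : sub c j j = c j.
Proof. unfold sub. destruct Nat.eq_dec; congruence. Qed.
Lemma sub_sym c i j : i <> j -> sub c i j = sub c j i.
Proof. intros H. unfold sub. destruct (Nat.eq_dec j i); [congruence|]. destruct (Nat.eq_dec i j); [congruence|]. field. Qed.

Lemma ext_repeat d j l : ext d (repeat j l) j = d j.
Proof. revert d; induction l; intros d; [reflexivity|]. simpl repeat. rewrite ext_cons, IHl. apply sub_diag. Qed.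

Lemma osc_ext s : forall c D, oscb c D -> isw s -> oscb (ext c s) ((2 / 3) ^ length s * D).
Proof.
  induction s as [|i s IH]; intros c D H Hs.
  - simpl. rewrite Rmult_1_l. exact H.
  - apply isw_cons in Hs as [Hi Hs]. rewrite ext_cons. simpl length. simpl pow.
    replace (2 / 3 * (2 / 3) ^ length s * D) with ((2 / 3) ^ length s * (2 / 3 * D)) by ring.
    apply IH; auto. apply osc_sub; auto.
Qed.

Lemma range_sub c lo hi i : (forall j, (j < 4)%nat -> lo <= c j <= hi) -> (i < 4)%nat ->
  forall j, (j < 4)%nat -> lo <= sub c i j <= hi.
Proof.
  intros H Hi j Hj. pose proof (H 0%nat ltac:(lia)). pose proof (H 1%nat ltac:(lia)).
  pose proof (H 2%nat ltac:(lia)). pose proof (H 3%nat ltac:(lia)). unfold sub. rewrite sumL4.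
  destruct i as [|[|[|[|]]]]; destruct j as [|[|[|[|]]]]; try lia; simpl Nat.eq_dec; cbv iota beta; lra.
Qed.

Lemma range_ext s : forall c lo hi, (forall j, (j < 4)%nat -> lo <= c j <= hi) -> isw s ->
  forall j, (j < 4)%nat -> lo <= ext c s j <= hi.
Proof.
  induction s as [|i s IH]; intros c lo hi H Hs j Hj; [apply H; auto|].
  apply isw_cons in Hs as [Hi Hs]. rewrite ext_cons. apply IH; auto. apply range_sub; auto.
Qed.

Lemma near_ext c D s : oscb c D -> isw s -> forall j b, (j < 4)%nat -> (b < 4)%nat -> Rabs (ext c s j - c b) <= D.
Proof.
  intros H Hs j b Hj Hb. apply abs_le_intro.
  assert (lo_hi : forall k, (k < 4)%nat -> c b - D <= c k <= c b + D).
  { intros k Hk. specialize (H k b Hk Hb). apply abs_le_elim in H. lra. }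
  pose proof (range_ext s c _ _ lo_hi Hs j Hj). lra.
Qed.

Definition cw (X : pt) (w : list nat) : nat -> R := fun j => ind (fW w (P j)) X.

Lemma cw_osc X w : oscb (cw X w) 1.
Proof. intros j k _ _. unfold cw. destruct (ind_01 (fW w (P j)) X) as [-> | ->];
  destruct (ind_01 (fW w (P k)) X) as [-> | ->]; apply abs_le_intro; lra. Qed.

Lemma app_inv_len {A} (w1 w2 t1 t2 : list A) : length w1 = length w2 -> w1 ++ t1 = w2 ++ t2 -> w1 = w2 /\ t1 = t2.
Proof.
  revert w2; induction w1 as [|a w1 IH]; intros [|b w2] Hl E; simpl in *; try lia; auto.
  injection E; intros E' ->. destruct (IH w2 ltac:(lia) E') as [-> ->]; auto.
Qed.

Lemma snoc_words n w i : In w (words n) -> (i < 4)%nat -> In (w ++ [i]) (words (S n)).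
Proof.
  intros Hw Hi. apply words_spec in Hw as [Hl Hw]. apply words_spec. split; [rewrite length_app; simpl; lia|].
  apply isw_app; split; auto. apply isw_cons; split; auto using isw_nil.
Qed.

Lemma app_words m n w s : In w (words m) -> In s (words n) -> In (w ++ s) (words (m + n)).
Proof.
  intros Hw Hs. apply words_spec in Hw as [Hl Hw]. apply words_spec in Hs as [Hl' Hs']. apply words_spec.
  split; [rewrite length_app; lia|]. apply isw_app; auto.
Qed.

Lemma consistency m X : forall n w1 w2 s1 s2 j1 j2, In w1 (words m) -> In w2 (words m) ->
  In s1 (words n) -> In s2 (words n) -> (j1 < 4)%nat -> (j2 < 4)%nat ->
  fW (w1 ++ s1) (P j1) = fW (w2 ++ s2) (P j2) -> ext (cw X w1) s1 j1 = ext (cw X w2) s2 j2.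
Proof.
  induction n; intros w1 w2 s1 s2 j1 j2 Hw1 Hw2 Hs1 Hs2 Hj1 Hj2 E.
  - apply words_spec in Hs1 as [Hl1 _]; apply words_spec in Hs2 as [Hl2 _].
    destruct s1; [|discriminate]; destruct s2; [|discriminate]. rewrite !app_nil_r in E.
    unfold ext; simpl. unfold cw. rewrite E. reflexivity.
  - assert (Hs1' := Hs1); assert (Hs2' := Hs2).
    apply words_spec in Hs1 as [Hl1 Hi1]; apply words_spec in Hs2 as [Hl2 Hi2].
    destruct (exists_last (l := s1)) as [t1 [i1 Et1]]; [intros ->; discriminate|].
    destruct (exists_last (l := s2)) as [t2 [i2 Et2]]; [intros ->; discriminate|].
    subst s1 s2. rewrite length_app in Hl1, Hl2. simpl in Hl1, Hl2.
    apply isw_app in Hi1 as [Ht1 Hi1]; apply isw_cons in Hi1 as [Hi1 _].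
    apply isw_app in Hi2 as [Ht2 Hi2]; apply isw_cons in Hi2 as [Hi2 _].
    assert (Wt1 : In t1 (words n)) by (apply words_spec; split; [lia|auto]).
    assert (Wt2 : In t2 (words n)) by (apply words_spec; split; [lia|auto]).
    rewrite !ext_snoc.
    assert (Lw1 : length (w1 ++ t1) = (m + n)%nat) by (rewrite length_app, (words_len m w1 Hw1); lia).
    assert (Lw2 : length (w2 ++ t2) = (m + n)%nat) by (rewrite length_app, (words_len m w2 Hw2); lia).
    rewrite !app_assoc in E. rewrite (fW_app (w1 ++ t1) [i1]), (fW_app (w2 ++ t2) [i2]) in E. change (fW [i1] (P j1)) with (fmap i1 (P j1)) in E.
    change (fW [i2] (P j2)) with (fmap i2 (P j2)) in E.
    destruct (Nat.eq_dec j1 i1) as [->|D1]; destruct (Nat.eq_dec j2 i2) as [->|D2].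
    + rewrite !sub_diag. rewrite !fmap_PP in E. apply IHn; auto.
    + exfalso. rewrite fmap_PP in E. apply (mid_not_LAT (w2 ++ t2) i2 j2 Hi2 Hj2 (not_eq_sym D2)). rewrite Lw2, <- E, <- Lw1. apply LAT_fW.
    + exfalso. rewrite fmap_PP in E. apply (mid_not_LAT (w1 ++ t1) i1 j1 Hi1 Hj1 (not_eq_sym D1)). rewrite E, Lw1, <- Lw2. apply LAT_fW.
    + set (Z := fW (w1 ++ t1) (fmap i1 (P j1))).
      assert (W1 : In (w1 ++ t1) (words (m + n))) by (apply app_words; auto).
      assert (W2 : In (w2 ++ t2) (words (m + n))) by (apply app_words; auto).
      assert (Za : Z = fW ((w1 ++ t1) ++ [i1]) (P j1)) by (unfold Z; rewrite (fW_app (w1 ++ t1) [i1]); reflexivity).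
      assert (Zb : Z = fW ((w1 ++ t1) ++ [j1]) (P i1)) by (unfold Z; rewrite (fW_app (w1 ++ t1) [j1]), fmap_sym; reflexivity).
      assert (Zc : Z = fW ((w2 ++ t2) ++ [i2]) (P j2)) by (unfold Z; rewrite E, (fW_app (w2 ++ t2) [i2]); reflexivity).
      assert (HZ : cnt (S (m + n)) Z = 2).
      { apply cnt_two. rewrite Za. apply fW_in_Vm; auto. apply snoc_words; auto.
        intros H0. apply (mid_not_LAT (w1 ++ t1) i1 j1); auto. fold Z. rewrite Lw1.
        apply LAT_Vm. apply (Vm_mono_le 0); auto; lia. }
      destruct (reps2 (S (m + n)) Z _ _ _ _ HZ (snoc_words _ _ _ W1 Hi1) Hj1 Za (snoc_words _ _ _ W1 Hj1) Hi1 Zb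
        ltac:(intros Ee; injection Ee; intros; congruence) ((w2 ++ t2) ++ [i2]) j2 (snoc_words _ _ _ W2 Hi2) Hj2 Zc)
        as [Ee|Ee]; injection Ee; intros Ej Ew; apply app_inj_tail in Ew as [Ew Ei]; subst;
        apply app_inv_len in Ew as [-> ->]; try (rewrite (words_len m w1 Hw1), (words_len m w2 Hw2); reflexivity);
        [reflexivity| apply sub_sym; auto].
Qed.

Lemma pow_le1 x n : 0 <= x <= 1 -> x ^ n <= 1.
Proof. intros H. induction n; simpl; [lra|]. assert (0 <= x ^ n) by (apply pow_le; lra). nra. Qed.

Lemma split_list {A} n (u : list A) : (n <= length u)%nat -> exists w s, u = w ++ s /\ length w = n.
Proof. intros H. exists (firstn n u), (skipn n u). split; [symmetry; apply firstn_skipn|apply firstn_length_le; auto]. Qed.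

Lemma split_address K (HK : is_attractor K) m x : K x -> forall k, exists w s y,
  In w (words m) /\ In s (words k) /\ K y /\ x = fW (w ++ s) y.
Proof.
  intros Hx k. destruct (K_address K HK x Hx (m + k)) as [u [y [Hu [Hy E]]]].
  apply words_spec in Hu as [Hl Hi]. destruct (split_list m u) as [w [s [-> Hw]]]; [lia|].
  rewrite length_app in Hl. apply isw_app in Hi as [Hiw His].
  exists w, s, y. repeat split; auto; apply words_spec; split; auto; lia.
Qed.

Lemma close K (HK : is_attractor K) m X w1 s1 y1 w2 s2 y2 x :
  In w1 (words m) -> In w2 (words m) -> isw s1 -> isw s2 -> (length s1 <= length s2)%nat ->
  K y1 -> K y2 -> x = fW (w1 ++ s1) y1 -> x = fW (w2 ++ s2) y2 ->
  forall j1 j2, (j1 < 4)%nat -> (j2 < 4)%nat ->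
  Rabs (ext (cw X w1) s1 j1 - ext (cw X w2) s2 j2) <= 2 * (2 / 3) ^ length s1.
Proof.
  intros Hw1 Hw2 Hs1 Hs2 Hle Hy1 Hy2 E1 E2 j1 j2 Hj1 Hj2.
  destruct (split_list (length s1) s2 Hle) as [t [r [-> Ht]]].
  apply isw_app in Hs2 as [Hit Hir].
  assert (E2' : x = fW (w2 ++ t) (fW r y2)) by (rewrite E2, app_assoc, fW_app; reflexivity).
  assert (T1 : Tset y1) by (apply (K_T K HK); auto).
  assert (T2 : Tset (fW r y2)) by (apply (K_T K HK); apply K_fW; auto).
  pose proof a_pos.
  assert (Hthr : 0 < a6 / (6 * 2 ^ (m + length s1))) by (apply Rdiv_lt_0_compat; [lra|]; assert (0 < 2 ^ (m + length s1)) by (apply pow_lt; lra); lra).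
  destruct (SEP (m + length s1) (w1 ++ s1) (w2 ++ t) y1 (fW r y2)) as [a [b [Ha [Hb Eab]]]]; auto.
  - rewrite length_app, (words_len m w1 Hw1); reflexivity.
  - rewrite length_app, (words_len m w2 Hw2); lia.
  - rewrite <- E1, <- E2', Rminus_diag, Rabs_R0; auto.
  - rewrite <- E1, <- E2', Rminus_diag, Rabs_R0; auto.
  - rewrite <- E1, <- E2', Rminus_diag, Rabs_R0; auto.
  - assert (C := consistency m X (length s1) w1 w2 s1 t a b Hw1 Hw2
        ltac:(apply words_spec; auto) ltac:(apply words_spec; split; [lia|auto]) Ha Hb Eab).
    assert (O1 := osc_ext s1 (cw X w1) 1 (cw_osc X w1) Hs1 j1 a Hj1 Ha).
    assert (O2 := near_ext (ext (cw X w2) t) ((2 / 3) ^ length t * 1) r (osc_ext t (cw X w2) 1 (cw_osc X w2) Hit) Hir j2 b Hj2 Hb).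
    rewrite ext_app. rewrite Ht in O2. rewrite <- C in O2.
    apply abs_le_elim in O1; apply abs_le_elim in O2. apply abs_le_intro. lra.
Qed.

Definition Char K m X (x : pt) (v : R) : Prop := forall w s y j, In w (words m) -> isw s -> K y ->
  x = fW (w ++ s) y -> (j < 4)%nat -> Rabs (v - ext (cw X w) s j) <= 3 * (2 / 3) ^ length s.

Definition psiX K m X (x : pt) : R := epsilon (inhabits 0) (fun v => Char K m X x v).

Lemma char_exists K (HK : is_attractor K) m X x : K x -> exists v, Char K m X x v.
Proof.
  intros Hx.
  assert (Hsel : forall k, exists p : list nat * list nat * pt, In (fst (fst p)) (words m) /\
     In (snd (fst p)) (words k) /\ K (snd p) /\ x = fW (fst (fst p) ++ snd (fst p)) (snd p)).
  { intros k. destruct (split_address K HK m x Hx k) as [w [s [y H]]]. exists (w, s, y); exact H. }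
  set (sel := fun k => proj1_sig (constructive_indefinite_description _ (Hsel k))).
  assert (Psel : forall k, In (fst (fst (sel k))) (words m) /\ In (snd (fst (sel k))) (words k) /\
     K (snd (sel k)) /\ x = fW (fst (fst (sel k)) ++ snd (fst (sel k))) (snd (sel k)))
    by (intros k; unfold sel; apply proj2_sig).
  set (a := fun k => ext (cw X (fst (fst (sel k)))) (snd (fst (sel k))) 0%nat).
  assert (Hab : forall k l, (k <= l)%nat -> Rabs (a k - a l) <= 2 * (2 / 3) ^ k).
  { intros k l Hkl. destruct (Psel k) as [Wk [Sk [Yk Ek]]]. destruct (Psel l) as [Wl [Sl [Yl El]]].
    unfold a. replace ((2/3)^k) with ((2/3)^(length (snd (fst (sel k))))) by (rewrite (words_len k _ Sk); reflexivity).
    apply (close K HK m X (fst (fst (sel k))) (snd (fst (sel k))) (snd (sel k)) (fst (fst (sel l))) (snd (fst (sel l))) (snd (sel l)) x); auto; try (eapply words_isw; eauto); try lia.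
    rewrite (words_len k _ Sk), (words_len l _ Sl); auto. }
  assert (Hgeo : forall eps, 0 < eps -> exists N, 2 * (2 / 3) ^ N < eps).
  { intros eps Heps. destruct (pow_lt_1_zero (2 / 3) ltac:(rewrite Rabs_right; lra) (eps / 2) ltac:(lra)) as [N HN].
    exists N. specialize (HN N (le_n N)). rewrite Rabs_right in HN by (apply Rle_ge, pow_le; lra). lra. }
  assert (Hc : Cauchy_crit a).
  { intros eps Heps. destruct (Hgeo eps Heps) as [N HN]. exists N. intros n1 n2 H1 H2. unfold R_dist.
    assert (forall k, (N <= k)%nat -> (2 / 3) ^ k <= (2 / 3) ^ N).
    { intros k Hk. replace k with (N + (k - N))%nat by lia. rewrite pow_add.
      assert (0 <= (2/3) ^ N) by (apply pow_le; lra). assert ((2/3) ^ (k - N) <= 1) by (apply pow_le1; lra). nra. }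
    destruct (Nat.le_ge_cases n1 n2).
    - specialize (Hab n1 n2 H0). specialize (H n1 H1). lra.
    - specialize (Hab n2 n1 H0). rewrite Rabs_minus_sym. specialize (H n2 H2). lra. }
  destruct (R_complete a Hc) as [v Hv]. exists v.
  intros w s y j Hw Hs Hy Exy Hj. apply le_epsilon. intros eps Heps.
  destruct (Hv eps Heps) as [N HN]. set (l := Nat.max N (length s)).
  specialize (HN l ltac:(unfold l; lia)). unfold R_dist in HN.
  destruct (Psel l) as [Wl [Sl [Yl El]]].
  assert (C := close K HK m X w s y _ _ _ x Hw Wl Hs (words_isw _ _ Sl)
    ltac:(rewrite (words_len l _ Sl); unfold l; lia) Hy Yl Exy El j 0%nat Hj ltac:(lia)).
  fold (a l) in C.
  assert (0 <= (2/3) ^ length s) by (apply pow_le; lra).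
  replace (v - ext (cw X w) s j) with (- (a l - v) - (ext (cw X w) s j - a l)) by ring.
  eapply Rle_trans; [apply Rabs_triang|]. rewrite Rabs_Ropp, Rabs_Ropp. lra.
Qed.

Lemma psi_char K (HK : is_attractor K) m X x : K x -> Char K m X x (psiX K m X x).
Proof. intros Hx. unfold psiX. apply epsilon_spec. apply char_exists; auto. Qed.

Lemma psi_val K (HK : is_attractor K) m X w s j : In w (words m) -> isw s -> (j < 4)%nat ->
  psiX K m X (fW (w ++ s) (P j)) = ext (cw X w) s j.
Proof.
  intros Hw Hs Hj. assert (HZ : K (fW (w ++ s) (P j))).
  { apply (K_fW K HK); [apply (proj2 (isw_app w s)); split; auto; eapply words_isw; eauto|apply K_P; auto]. }
  assert (Ch := psi_char K HK m X _ HZ). apply Rminus_diag_uniq.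
  apply (zero_geom _ 3 (2 / 3)); [lra|]. intros l.
  assert (E : fW (w ++ s) (P j) = fW (w ++ (s ++ repeat j l)) (P j)) by (rewrite app_assoc, (fW_app (w ++ s) (repeat j l)), fW_repeat_P; reflexivity).
  assert (Hr : isw (s ++ repeat j l)) by (apply isw_app; split; auto; intros i Hi; apply repeat_spec in Hi; lia).
  specialize (Ch w (s ++ repeat j l) (P j) j Hw Hr (K_P K HK j Hj) E Hj).
  rewrite ext_app, ext_repeat, length_app, pow_add in Ch.
  assert (0 <= (2/3) ^ length s) by (apply pow_le; lra). assert ((2/3) ^ length s <= 1) by (apply pow_le1; lra).
  assert (0 <= (2/3) ^ l) by (apply pow_le; lra). assert ((2/3) ^ length s * (2/3) ^ l <= (2/3) ^ l) by nra. rewrite repeat_length in Ch. lra.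
Qed.

Lemma psi_cont K (HK : is_attractor K) m X : contK K (psiX K m X).
Proof.
  intros x Hx eps Heps.
  destruct (pow_lt_1_zero (2 / 3) ltac:(rewrite Rabs_right; lra) (eps / 6) ltac:(lra)) as [k Hk].
  specialize (Hk k (le_n k)). rewrite Rabs_right in Hk by (apply Rle_ge, pow_le; lra).
  pose proof a_pos. assert (0 < 2 ^ (m + k)) by (apply pow_lt; lra).
  exists (a6 / (6 * 2 ^ (m + k))). split; [apply Rdiv_lt_0_compat; lra|].
  intros y Hy Hyx.
  destruct (split_address K HK m x Hx k) as [w1 [s1 [y1 [Hw1 [Hs1 [Hy1 E1]]]]]].
  destruct (split_address K HK m y Hy k) as [w2 [s2 [y2 [Hw2 [Hs2 [Hy2 E2]]]]]].
  destruct (SEP (m + k) (w1 ++ s1) (w2 ++ s2) y1 y2) as [a [b [Ha [Hb Eab]]]].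
  - rewrite length_app, (words_len m w1 Hw1), (words_len k s1 Hs1); reflexivity.
  - rewrite length_app, (words_len m w2 Hw2), (words_len k s2 Hs2); reflexivity.
  - apply (K_T K HK); auto.
  - apply (K_T K HK); auto.
  - rewrite <- E1, <- E2, Rabs_minus_sym. eapply Rle_lt_trans; [apply dist_c1|auto].
  - rewrite <- E1, <- E2, Rabs_minus_sym. eapply Rle_lt_trans; [apply dist_c2|auto].
  - rewrite <- E1, <- E2, Rabs_minus_sym. eapply Rle_lt_trans; [apply dist_c3|auto].
  - assert (C := consistency m X k w1 w2 s1 s2 a b Hw1 Hw2 Hs1 Hs2 Ha Hb Eab).
    assert (Cx := psi_char K HK m X x Hx w1 s1 y1 a Hw1 (words_isw _ _ Hs1) Hy1 E1 Ha).
    assert (Cy := psi_char K HK m X y Hy w2 s2 y2 b Hw2 (words_isw _ _ Hs2) Hy2 E2 Hb).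
    rewrite (words_len k s1 Hs1) in Cx. rewrite (words_len k s2 Hs2) in Cy.
    apply abs_le_elim in Cx; apply abs_le_elim in Cy. apply Rabs_def1; lra.
Qed.

Lemma fW_snoc v i x : fW (v ++ [i]) x = fW v (fmap i x).
Proof. rewrite fW_app. reflexivity. Qed.

Lemma psi_snoc K (HK : is_attractor K) m X w s i j : In w (words m) -> isw s -> (i < 4)%nat -> (j < 4)%nat ->
  psiX K m X (fW ((w ++ s) ++ [i]) (P j)) = sub (ext (cw X w) s) i j.
Proof.
  intros Hw Hs Hi Hj. rewrite <- app_assoc, (psi_val K HK m X w (s ++ [i]) j Hw); auto.
  - rewrite ext_snoc; reflexivity.
  - apply (proj2 (isw_app s [i])); split; auto. apply (proj2 (isw_cons i [])); split; auto using isw_nil.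
Qed.

Lemma split_words m n v : (m <= n)%nat -> In v (words n) -> exists w s, v = w ++ s /\ In w (words m) /\ In s (words (n - m)).
Proof.
  intros Hmn Hv. apply words_spec in Hv as [Hl Hi].
  destruct (split_list m v) as [w [s [-> Hw]]]; [lia|].
  rewrite length_app in Hl. apply isw_app in Hi as [Hiw His].
  exists w, s. repeat split; auto; apply words_spec; split; auto; lia.
Qed.

Lemma energy_step K (HK : is_attractor K) m X g n : (m <= n)%nat ->
  Eraw (S n) g (psiX K m X) = 2 / 3 * Eraw n g (psiX K m X).
Proof.
  intros Hmn. rewrite !Eraw_cells, words_app_sum, <- sumR_scal. apply sumR_ext; intros v Hv.
  destruct (split_words m n v Hmn Hv) as [w [s [-> [Hw Hs]]]].
  assert (His : isw s) by (eapply words_isw; eauto).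
  rewrite sumL4. unfold e4.
  rewrite !(psi_snoc K HK m X w s) by (auto; lia).
  rewrite !(psi_val K HK m X w s) by (auto; lia).
  rewrite !fW_snoc.
  rewrite ?fmap_PP, ?(fmap_sym 1 0), ?(fmap_sym 2 0), ?(fmap_sym 3 0), ?(fmap_sym 2 1),
    ?(fmap_sym 3 1), ?(fmap_sym 3 2).
  unfold sub. rewrite !sumL4. simpl Nat.eq_dec. cbv iota beta.
  field.
Qed.

Lemma energy_const K (HK : is_attractor K) m X g n : (m <= n)%nat ->
  Em n g (psiX K m X) = Em m g (psiX K m X).
Proof.
  intros Hmn. induction Hmn; [reflexivity|]. rewrite <- IHHmn. unfold Em.
  rewrite energy_step by auto. simpl pow. field.
Qed.

Lemma psi_Vm K (HK : is_attractor K) m X Y : In Y (Vm m) -> psiX K m X Y = ind Y X.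
Proof.
  intros HY. apply inVm in HY as [w [j [Hw [Hj ->]]]].
  rewrite <- (app_nil_r w) at 1. rewrite psi_val; auto using isw_nil.
Qed.

Lemma Eraw_delta m u g X : In X (Vm m) -> (forall Y, In Y (Vm m) -> g Y = ind Y X) ->
  Eraw m u g = - Lapm m u X.
Proof.
  intros HX Hg. unfold Eraw.
  rewrite (upairs_sum (adj m) (fun x y => (u x - u y) * (g x - g y))); [|apply adj_irrefl|apply adj_sym|intros; ring].
  unfold Lapm. rewrite sumR_filter.
  rewrite (sumR_ext _ (fun x => sumR (fun y => ind x X * (if adj m x y then u x - u y else 0)) (Vm m) -
                                sumR (fun y => ind y X * (if adj m x y then u x - u y else 0)) (Vm m))).
  2:{ intros x Hx. rewrite <- sumR_minus. apply sumR_ext; intros y Hy. rewrite (Hg x Hx), (Hg y Hy).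
      destruct adj; ring. }
  rewrite sumR_minus.
  rewrite (sumR_ext (fun x => sumR (fun y => ind x X * (if adj m x y then u x - u y else 0)) (Vm m))
                    (fun x => ind X x * sumR (fun y => if adj m x y then u x - u y else 0) (Vm m))).
  2:{ intros x _. rewrite <- sumR_scal, ind_sym. reflexivity. }
  rewrite sum_ind by (auto; apply Vm_NoDup).
  rewrite sumR_swap.
  rewrite (sumR_ext (fun y => sumR (fun x => ind y X * (if adj m x y then u x - u y else 0)) (Vm m))
                    (fun y => ind X y * sumR (fun x => if adj m x y then u x - u y else 0) (Vm m))).
  2:{ intros y _. rewrite <- sumR_scal, ind_sym. reflexivity. }
  rewrite sum_ind by (auto; apply Vm_NoDup).
  rewrite (sumR_ext (fun x => if adj m x X then u x - u X else 0) (fun x => - (if adj m X x then u X - u x else 0)))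
    by (intros; rewrite adj_sym; destruct adj; ring).
  rewrite (sumR_ext (fun y => if adj m X y then u y - u X else 0) (fun y => - (if adj m X y then u X - u y else 0)))
    by (intros; destruct adj; ring).
  rewrite (sumR_ext (fun x => - (if adj m X x then u X - u x else 0)) (fun x => (-1) * (if adj m X x then u X - u x else 0)))
    by (intros; ring).
  rewrite !sumR_scal. field.
Qed.

Lemma I_delta K (HK : is_attractor K) I (HI : is_ss_integral K I) m X g :
  In X (Vm m) -> ~ In X (Vm 0) -> contK K g -> (forall w, In w (words m) -> harm (fun x => g (fW w x))) ->
  (forall w j, In w (words m) -> (j < 4)%nat -> g (fW w (P j)) = ind (fW w (P j)) X) ->
  I g = 2 / 4 ^ (m + 1).
Proof.
  intros HX HX0 Hc Hh Hv.
  rewrite (I_iter K HK I HI m g Hc).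
  rewrite (sumR_ext _ (fun w => / 4 * sumR (fun j => ind (fW w (P j)) X) L4)).
  - rewrite sumR_scal. fold (cnt m X). rewrite cnt_two by auto.
    rewrite pow_inv, pow_add. field. apply pow_nonzero; lra.
  - intros w Hw. rewrite (INT K HK I HI).
    + unfold avg. f_equal. apply sumR_ext; intros j Hj. apply Hv; auto. apply inL4; auto.
    + apply contK_fW; auto. intros; apply K_fW; auto. eapply words_isw; eauto.
    + apply Hh; auto.
Qed.

Lemma psi_harm_cells K (HK : is_attractor K) m X w : In w (words m) -> harm (fun x => psiX K m X (fW w x)).
Proof.
  intros Hw v a b Hv Ha Hb Hab. cbv beta.
  rewrite <- !fW_app.
  rewrite (sumR_ext _ (fun j => psiX K m X (fW (w ++ v) (P j)))) by (intros; rewrite fW_app; reflexivity).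
  rewrite <- fW_snoc. rewrite psi_snoc; auto.
  rewrite !psi_val; auto. unfold sub. destruct (Nat.eq_dec b a); [congruence|].
  f_equal. f_equal. apply sumR_ext; intros j Hj. rewrite psi_val; auto. apply inL4; auto.
Qed.

Lemma psi_I K (HK : is_attractor K) I (HI : is_ss_integral K I) m X :
  In X (Vm m) -> ~ In X (Vm 0) -> I (psiX K m X) = 2 / 4 ^ (m + 1).
Proof.
  intros HX HX0. apply (I_delta K HK I HI m X); auto.
  - apply psi_cont; auto.
  - intros; apply psi_harm_cells; auto.
  - intros w j Hw Hj. apply psi_Vm; auto. apply fW_in_Vm; auto.
Qed.

Lemma psi_nonneg K (HK : is_attractor K) m X x : K x -> 0 <= psiX K m X x.
Proof.
  intros Hx. apply Rnot_lt_le. intros Hneg.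
  assert (Hz : forall k, - psiX K m X x <= 3 * (2 / 3) ^ k).
  { intros k. destruct (split_address K HK m x Hx k) as [w [s [y [Hw [Hs [Hy E]]]]]].
    assert (C := psi_char K HK m X x Hx w s y 0%nat Hw (words_isw _ _ Hs) Hy E ltac:(lia)).
    rewrite (words_len k s Hs) in C.
    assert (R := range_ext s (cw X w) 0 1 ltac:(intros j _; unfold cw; destruct (ind_01 (fW w (P j)) X) as [->| ->]; lra)
      (words_isw _ _ Hs) 0%nat ltac:(lia)).
    apply abs_le_elim in C. lra. }
  destruct (pow_lt_1_zero (2 / 3) ltac:(rewrite Rabs_right; lra) (- psiX K m X x / 3) ltac:(lra)) as [N HN].
  specialize (HN N (le_n N)). rewrite Rabs_right in HN by (apply Rle_ge, pow_le; lra).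
  specialize (Hz N). lra.
Qed.

Lemma T_diam y z : Tset y -> Tset z -> pdist y z <= 2 * a6.
Proof.
  intros Ty Tz. pose proof a_pos. unfold Tset in *. rewrite pdist_eq.
  rewrite <- (sqrt_pow2 (2 * a6)) by lra. apply sqrt_le_1_alt.
  assert ((c1 y - c1 z) ^ 2 <= a6 ^ 2) by (simpl; nra).
  assert ((c2 y - c2 z) ^ 2 <= a6 ^ 2) by (simpl; nra).
  assert ((c3 y - c3 z) ^ 2 <= a6 ^ 2) by (simpl; nra).
  assert (0 <= a6 ^ 2) by (apply pow2_ge_0). simpl in *. nra.
Qed.

Lemma psi_support K (HK : is_attractor K) m X x : K x -> psiX K m X x <> 0 -> pdist x X <= 2 * a6 / 2 ^ m.
Proof.
  intros Hx Hne. destruct (split_address K HK m x Hx 0) as [w [s [y [Hw [Hs [Hy E]]]]]].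
  apply words_spec in Hs as [Hls _]. destruct s; [|discriminate]. rewrite app_nil_r in E.
  destruct (classic (exists j, (j < 4)%nat /\ fW w (P j) = X)) as [[j [Hj EX]]|Hno].
  - rewrite E, <- EX, pdist_fW, (words_len m w Hw). unfold Rdiv. apply Rmult_le_compat_r.
    + left; apply Rinv_0_lt_compat, pow_lt; lra.
    + apply T_diam; [apply (K_T K HK); auto|apply T_P].
  - exfalso. apply Hne. apply (zero_geom _ 3 (2 / 3)); [lra|]. intros k.
    destruct (K_address K HK y Hy k) as [s [y' [Hs [Hy' Ey]]]].
    assert (E' : x = fW (w ++ s) y') by (rewrite E, Ey, fW_app; reflexivity).
    assert (C := psi_char K HK m X x Hx w s y' 0%nat Hw (words_isw _ _ Hs) Hy' E' ltac:(lia)).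
    rewrite (words_len k s Hs) in C.
    assert (R := range_ext s (cw X w) 0 0 ltac:(intros j Hj; unfold cw; rewrite ind_neq; [lra|]; intros Ej; apply Hno; eauto)
      (words_isw _ _ Hs) 0%nat ltac:(lia)).
    replace (ext (cw X w) s 0%nat) with 0 in C by lra. rewrite Rminus_0_r in C. exact C.
Qed.

Lemma I_local K (HK : is_attractor K) I (HI : is_ss_integral K I) m X f eps :
  contK K f -> (forall x, K x -> pdist x X <= 2 * a6 / 2 ^ m -> Rabs (f x - f X) <= eps) ->
  Rabs (I (fun x => psiX K m X x * f x) - f X * I (psiX K m X)) <= eps * I (psiX K m X).
Proof.
  intros Hf Hloc. set (psi := psiX K m X).
  assert (Cp : contK K psi) by apply psi_cont, HK.
  assert (Ch : contK K (fun x => psi x * f x)) by (apply contK_mult; auto).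
  rewrite <- (Rmult_1_l (I (fun x => psi x * f x))).
  replace (1 * I (fun x => psi x * f x) - f X * I psi) with (1 * I (fun x => psi x * f x) + (- f X) * I psi) by ring.
  rewrite <- (I_lin K I HI); auto.
  set (g := fun x => 1 * (psi x * f x) + - f X * psi x).
  assert (Cg : contK K g) by (apply contK_lin; auto).
  assert (Hg : forall x, K x -> - (eps * psi x) <= g x <= eps * psi x).
  { intros x Hx. unfold g. assert (0 <= psi x) by (apply psi_nonneg; auto).
    destruct (Req_dec (psi x) 0) as [Z|Z].
    - rewrite Z. lra.
    - assert (B := Hloc x Hx (psi_support K HK m X x Hx Z)). apply abs_le_elim in B.
      replace (1 * (psi x * f x) + - f X * psi x) with (psi x * (f x - f X)) by ring. nra. }
  assert (P1 := I_pos K I HI (fun x => eps * psi x + (-1) * g x) (contK_lin K _ _ _ _ Cp Cg)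
    ltac:(intros x Hx; specialize (Hg x Hx); cbv beta; lra)).
  assert (P2 := I_pos K I HI (fun x => eps * psi x + 1 * g x) (contK_lin K _ _ _ _ Cp Cg)
    ltac:(intros x Hx; specialize (Hg x Hx); cbv beta; lra)).
  rewrite (I_lin K I HI) in P1, P2; auto. apply abs_le_intro. lra.
Qed.

Lemma Un_cv_eventually (v : nat -> R) N c : (forall n, (N <= n)%nat -> v n = c) -> Un_cv v c.
Proof. intros H eps Heps. exists N. intros n Hn. unfold R_dist. rewrite H by lia. rewrite Rminus_diag, Rabs_R0. auto. Qed.

Theorem part2 K (HK : is_attractor K) I (HI : is_ss_integral K I) u f :
  is_Laplacian K I u f -> forall X, Vstar X -> ~ In X (Vm 0) ->
  exists l, Un_cv (fun m => 6 ^ m * Lapm m u X) l /\ f X = 2 * l.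
Proof.
  intros [HuE [Hf HL]] X [m0 Hm0] HX0.
  assert (Key : forall m, (m0 <= m)%nat -> 6 ^ m * Lapm m u X = 4 ^ m * I (fun x => psiX K m X x * f x)).
  { intros m Hm. set (psi := psiX K m X).
    assert (HXm : In X (Vm m)) by (apply (Vm_mono_le m0); auto).
    assert (Hd : dom0E K psi).
    { split; [split|].
      - apply psi_cont; auto.
      - exists (Em m psi psi). apply (Un_cv_eventually _ m). intros n Hn. apply energy_const; auto.
      - intros Y HY. unfold psi. rewrite psi_Vm by (auto; apply (Vm_mono_le 0); auto; lia).
        apply ind_neq. intros ->. contradiction. }
    specialize (HL psi Hd).
    assert (Hc : Un_cv (fun n => Em n u psi) (Em m u psi)).
    { apply (Un_cv_eventually _ m). intros n Hn. apply energy_const; auto. }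
    assert (E := UL_sequence _ _ _ HL Hc).
    unfold Em in E. rewrite (Eraw_delta m u psi X HXm) in E by (intros; apply psi_Vm; auto).
    replace (6 ^ m) with (4 ^ m * (3 / 2) ^ m) by (rewrite <- Rpow_mult_distr; f_equal; lra).
    fold psi. rewrite Rmult_assoc. f_equal. lra. }
  exists (f X / 2). split; [|field].
  assert (KX : K X).
  { apply inVm in Hm0 as [w [j [Hw [Hj ->]]]]. apply K_fW; auto; [eapply words_isw; eauto|apply K_P; auto]. }
  intros eps Heps.
  destruct (Hf X KX eps Heps) as [d [Hd Hfd]].
  destruct (cv_pow_half (2 * a6) d Hd) as [N1 HN1].
  exists (Nat.max m0 N1). intros m Hm. unfold R_dist.
  rewrite Key by lia.
  assert (Hloc : forall x, K x -> pdist x X <= 2 * a6 / 2 ^ m -> Rabs (f x - f X) <= eps).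
  { intros x Hx Hdx. left. apply Hfd; auto. specialize (HN1 m ltac:(lia)). unfold R_dist in HN1.
    rewrite Rminus_0_r in HN1. pose proof (Rle_abs (2 * a6 / 2 ^ m)). lra. }
  assert (B := I_local K HK I HI m X f eps Hf Hloc).
  assert (HXm : In X (Vm m)) by (apply (Vm_mono_le m0); auto; lia).
  rewrite (psi_I K HK I HI m X HXm HX0) in B.
  assert (H4 : 0 < 4 ^ m) by (apply pow_lt; lra).
  replace (4 ^ m * I (fun x => psiX K m X x * f x) - f X / 2) with
    (4 ^ m * (I (fun x => psiX K m X x * f x) - f X * (2 / 4 ^ (m + 1)))) by (rewrite pow_add; field; lra).
  rewrite Rabs_mult, Rabs_right by lra.
  apply Rle_lt_trans with (4 ^ m * (eps * (2 / 4 ^ (m + 1)))).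
  - apply Rmult_le_compat_l; lra.
  - rewrite pow_add. field_simplify; lra.
Qed.


Theorem mainTheorem7 (K : pt -> Prop) (I : (pt -> R) -> R)
  (HK : is_attractor K) (HI : is_ss_integral K I) :
  (forall (m : nat) (X : pt) (psi : pt -> R),
      (1 <= m)%nat -> In X (Vm m) -> ~ In X (Vm 0) -> is_psi K m X psi ->
      I psi = 2 / 4 ^ (m + 1))
  /\
  (forall (u f : pt -> R), is_Laplacian K I u f ->
     forall X : pt, Vstar X -> ~ In X (Vm 0) ->
       exists l, Un_cv (fun m => 6 ^ m * Lapm m u X) l /\ f X = 2 * l).
Proof.
  split.
  - intros m X psi Hm HX HX0 Hpsi. exact (part1 K HK I HI m X psi Hm HX HX0 Hpsi).
  - intros u f Hl X HX HX0. exact (part2 K HK I HI u f Hl X HX HX0).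
Qed.
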